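(* Let $T>0$, $H_T=(0,T)\times(0,\infty)$, $\tilde U\in C([0,T])$ with $\tilde U\le0$, and let $w\ge0$ be a classical solution of $$\partial_tw-w^2+\partial_y^{-1}(w+\tilde U)\,\partial_yw-2\tilde Uw+\int_{+\infty}^yw\,dy'-\partial_y^2w=0\ \text{ in }H_T,\qquad w|_{y=0}=-\tilde U(t),\quad\lim_{y\to+\infty}w=0,$$ with $\sup_{H_T}(|w|+|\partial_yw|)e^{y}<\infty$. Let $\rho$ be an admissible weight with constants $C_f,\beta$ and set $G(t)=\int_0^\infty\rho(y)w(t,y)dy$. Then for $t\in(0,T)$, $$\frac{dG}{dt}\ge\frac{2(1-\beta)}{\|\rho\|_{L^1(\mathbb R_+)}}G^2-\|\tilde U\|_{L^\infty([0,T])}(3+C_f)\,G.$$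
   Context: $\partial_y^{-1}f(t,y):=\int_0^yf(t,y')dy'$. Admissible weight: $\rho:[0,\infty)\to[0,\infty)$, $\rho\in W^{2,\infty}(\mathbb R_+)\cap C^1(\mathbb R_+)\cap L^1(\mathbb R_+)$, with $\rho=f$ on $[0,B]$ and $\rho=g$ on $(B,\infty)$, for numbers $0<A<M_0<B<\infty$, functions $f\in C^1([0,B])\cap C^2([0,B]\setminus\{A\})$, $g\in C^2([M_0,\infty))\cap L^1([M_0,\infty))$, a cut-off $\eta\in C^\infty(\mathbb R)$ with $\eta=0$ on $(-\infty,M_0)$, $\eta=1$ on $(B,\infty)$, $0\le\eta'\le\frac{2}{B-M_0}$, and constants $C_f>0$, $\beta\in(0,1)$, such that: (F1) $f(0)=0$, $f>0$ on $(0,B]$; (F2) $yf'(y)\le C_ff(y)$ on $[0,B]$; (F3) $\int_0^yf\,dy'+f''(y)\ge0$ on $[0,B]\setminus\{A\}$; (F4) $f''\le0$ on $[0,B]\setminus\{A\}$; (G1) $\lim_{y\to\infty}g=\lim_{y\to\infty}g'=0$, $g>0$ on $(M_0,\infty)$; (G2) $g'<0$, $g''>0$ on $(M_0,\infty)$; (G3) $\frac{(g')^2}{gg''}\le\beta$ on $[B,\infty)$; (FG1) $f(B)=g(B)$, $f'(B)=g'(B)$; (FG2) $\eta\frac{(g')^2}{fg''}\le\beta$ and $2\eta'g'+\eta g''-f''\ge0$ on $[M_0,B]$. *)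

(* Defs.v *)
From Stdlib Require Import Reals Lra ClassicalEpsilon.
Open Scope R_scope.

Definition cont_within (S : R -> Prop) (f : R -> R) (x : R) : Prop :=
  forall eps, eps > 0 -> exists d, d > 0 /\
    forall x', S x' -> Rabs (x' - x) < d -> Rabs (f x' - f x) < eps.

(* f has derivative l at x relative to the set S (one-sided at endpoints) *)
Definition deriv_within (S : R -> Prop) (f : R -> R) (l x : R) : Prop :=
  forall eps, eps > 0 -> exists d, d > 0 /\
    forall h, h <> 0 -> S (x + h) -> Rabs h < d ->
      Rabs ((f (x + h) - f x) / h - l) < eps.

Definition cont2_on (S : R -> R -> Prop) (F : R -> R -> R) : Prop :=
  forall t y, S t y -> forall eps, eps > 0 -> exists d, d > 0 /\
    forall t' y', S t' y' -> Rabs (t' - t) < d -> Rabs (y' - y) < d ->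
      Rabs (F t' y' - F t y) < eps.

(* Riemann integral of f on [a,b] (0 if f is not Riemann integrable) *)
Definition Rint (f : R -> R) (a b : R) : R :=
  match excluded_middle_informative
          (exists v, exists pr : Riemann_integrable f a b, RiemannInt pr = v) with
  | left H => proj1_sig (constructive_indefinite_description _ H)
  | right _ => 0
  end.

Definition has_lim_inf (F : R -> R) (l : R) : Prop :=
  forall eps, eps > 0 -> exists M, forall b, b >= M -> Rabs (F b - l) < eps.

(* improper integral int_a^infinity f = lim_{b -> oo} int_a^b f (0 if no limit) *)
Definition RintInf (f : R -> R) (a : R) : R :=
  match excluded_middle_informative (exists l, has_lim_inf (fun b => Rint f a b) l) with
  | left H => proj1_sig (constructive_indefinite_description _ H)
  | right _ => 0
  end.

Definition L1_on_half (f : R -> R) (a : R) : Prop :=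
  (forall b, a <= b -> exists pr : Riemann_integrable f a b, True) /\
  exists l, has_lim_inf (fun b => Rint (fun y => Rabs (f y)) a b) l.

Definition smooth (eta : R -> R) : Prop :=
  exists D : nat -> R -> R, D 0%nat = eta /\
    forall n x, derivable_pt_lim (D n) x (D (S n) x).

Definition admissible_weight (rho : R -> R) (Cf beta : R) : Prop :=
  Cf > 0 /\ 0 < beta < 1 /\
  (forall y, 0 <= y -> 0 <= rho y) /\
  (* rho in W^{2,oo}(R+) /\ C^1(R+) /\ L^1(R+):
     rho is C^1 on [0,oo), rho and rho' bounded, rho' Lipschitz, rho in L^1 *)
  (exists drho : R -> R,
      (forall y, 0 <= y -> deriv_within (fun z => 0 <= z) rho (drho y) y) /\
      (forall y, 0 <= y -> cont_within (fun z => 0 <= z) drho y) /\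
      (exists K, forall y, 0 <= y -> Rabs (rho y) <= K /\ Rabs (drho y) <= K) /\
      (exists L, forall y z, 0 <= y -> 0 <= z ->
          Rabs (drho y - drho z) <= L * Rabs (y - z))) /\
  L1_on_half rho 0 /\
  exists (A M0 B : R) (f df ddf g dg ddg eta deta : R -> R),
    0 < A /\ A < M0 /\ M0 < B /\
    (forall y, 0 <= y <= B -> rho y = f y) /\
    (forall y, B < y -> rho y = g y) /\
    (* f in C^1([0,B]) /\ C^2([0,B] \ {A}) *)
    (forall y, 0 <= y <= B -> deriv_within (fun z => 0 <= z <= B) f (df y) y) /\
    (forall y, 0 <= y <= B -> cont_within (fun z => 0 <= z <= B) df y) /\
    (forall y, 0 <= y <= B -> y <> A ->
        deriv_within (fun z => 0 <= z <= B /\ z <> A) df (ddf y) y) /\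
    (forall y, 0 <= y <= B -> y <> A ->
        cont_within (fun z => 0 <= z <= B /\ z <> A) ddf y) /\
    (* g in C^2([M0,oo)) /\ L^1([M0,oo)) *)
    (forall y, M0 <= y -> deriv_within (fun z => M0 <= z) g (dg y) y) /\
    (forall y, M0 <= y -> deriv_within (fun z => M0 <= z) dg (ddg y) y) /\
    (forall y, M0 <= y -> cont_within (fun z => M0 <= z) ddg y) /\
    L1_on_half g M0 /\
    smooth eta /\ (forall x, derivable_pt_lim eta x (deta x)) /\
    (forall x, x < M0 -> eta x = 0) /\ (forall x, B < x -> eta x = 1) /\
    (forall x, 0 <= deta x <= 2 / (B - M0)) /\
    (* (F1)-(F4) *)
    f 0 = 0 /\ (forall y, 0 < y <= B -> f y > 0) /\
    (forall y, 0 <= y <= B -> y * df y <= Cf * f y) /\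
    (forall y, 0 <= y <= B -> y <> A -> Rint f 0 y + ddf y >= 0) /\
    (forall y, 0 <= y <= B -> y <> A -> ddf y <= 0) /\
    (* (G1)-(G3) *)
    has_lim_inf g 0 /\ has_lim_inf dg 0 /\ (forall y, M0 < y -> g y > 0) /\
    (forall y, M0 < y -> dg y < 0 /\ ddg y > 0) /\
    (forall y, B <= y -> (dg y) ^ 2 / (g y * ddg y) <= beta) /\
    (* (FG1)-(FG2) *)
    f B = g B /\ df B = dg B /\
    (forall y, M0 <= y <= B ->
        eta y * (dg y) ^ 2 / (f y * ddg y) <= beta /\
        2 * deta y * dg y + eta y * ddg y - ddf y >= 0).

(* Main.v *)
Require Import Defs.
From Stdlib Require Import Reals Lra Psatz ClassicalEpsilon.
From Coquelicot Require Import Coquelicot.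
Open Scope R_scope.

Lemma cpt_eps f x : continuity_pt f x <->
  (forall eps, eps > 0 -> exists d, d > 0 /\ forall z, Rabs (z - x) < d -> Rabs (f z - f x) < eps).
Proof.
  unfold continuity_pt, continue_in, limit1_in, limit_in; simpl; unfold R_dist. split.
  - intros H0 eps He. destruct (H0 eps He) as [d [Hd H1]]. exists d; split; auto.
    intros z Hz. destruct (Req_dec z x) as [->|Hn].
    + replace (f x - f x) with 0 by ring. rewrite Rabs_R0; lra.
    + apply H1. split; auto. split. exact I. auto.
  - intros H0 eps He. destruct (H0 eps He) as [d [Hd H1]]. exists d; split; auto.
    intros z [_ Hz]. apply H1; auto.
Qed.

Lemma cw_of_cpt S f x : continuity_pt f x -> cont_within S f x.
Proof.
  intros H eps He. destruct (proj1 (cpt_eps f x) H eps He) as [d [Hd H1]].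
  exists d; split; auto.
Qed.

Lemma cpt_of_cw S f x d : d > 0 -> (forall z, Rabs (z - x) < d -> S z) ->
  cont_within S f x -> continuity_pt f x.
Proof.
  intros Hd HS H. apply (proj2 (cpt_eps f x)). intros eps He. destruct (H eps He) as [d1 [Hd1 H1]].
  exists (Rmin d d1); split. apply Rmin_pos; lra.
  intros z Hz. apply H1. apply HS. eapply Rlt_le_trans; [exact Hz|apply Rmin_l].
  eapply Rlt_le_trans; [exact Hz|apply Rmin_r].
Qed.

Lemma dw_of_dpt S f l x : derivable_pt_lim f x l -> deriv_within S f l x.
Proof.
  intros H eps He. destruct (H eps He) as [d H1]. exists d; split. apply (cond_pos d).
  intros h Hh _ Hh2. apply H1; auto.
Qed.

Lemma dpt_of_dw S f l x d : d > 0 -> (forall z, Rabs (z - x) < d -> S z) ->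
  deriv_within S f l x -> derivable_pt_lim f x l.
Proof.
  intros Hd HS H eps He. destruct (H eps He) as [d1 [Hd1 H1]].
  assert (Hm : 0 < Rmin d d1) by (apply Rmin_pos; lra).
  exists (mkposreal _ Hm). intros h Hh Hh2. simpl in Hh2. apply H1; auto.
  apply HS. replace (x + h - x) with h by ring. eapply Rlt_le_trans; [exact Hh2|apply Rmin_l].
  eapply Rlt_le_trans; [exact Hh2|apply Rmin_r].
Qed.

Lemma cw_of_dw S f l x : S x -> deriv_within S f l x -> cont_within S f x.
Proof.
  intros Sx H eps He.
  destruct (H 1 Rlt_0_1) as [d [Hd H1]].
  exists (Rmin d (eps / (Rabs l + 1 + 1))). split.
  { apply Rmin_pos; auto. apply Rdiv_lt_0_compat; auto. pose proof (Rabs_pos l); lra. }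
  intros x' Sx' Hx'.
  destruct (Req_dec x' x) as [->|Hne].
  { replace (f x - f x) with 0 by ring; rewrite Rabs_R0; lra. }
  set (h := x' - x). assert (Hh : h <> 0) by (unfold h; lra).
  assert (Hx'' : x' = x + h) by (unfold h; ring).
  assert (Hhd : Rabs h < d) by (eapply Rlt_le_trans; [exact Hx'|apply Rmin_l]).
  assert (Hhe : Rabs h < eps / (Rabs l + 1 + 1)) by (eapply Rlt_le_trans; [exact Hx'|apply Rmin_r]).
  clearbody h. subst x'. specialize (H1 h Hh Sx' Hhd).
  replace (f (x + h) - f x) with (((f (x + h) - f x) / h - l) * h + l * h).
  2:{ field. auto. }
  eapply Rle_lt_trans. apply Rabs_triang. rewrite !Rabs_mult.
  assert (Hp : 0 < Rabs l + 1 + 1) by (pose proof (Rabs_pos l); lra).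
  assert (Rabs h * (Rabs l + 1 + 1) < eps).
  { apply (Rmult_lt_compat_r (Rabs l + 1 + 1)) in Hhe; auto.
    replace (eps / (Rabs l + 1 + 1) * (Rabs l + 1 + 1)) with eps in Hhe by (field; lra). lra. }
  pose proof (Rabs_pos h). pose proof (Rabs_pos l). nra.
Qed.

Lemma mono_within (L d : R -> R) a c : a <= c ->
  (forall x, a <= x <= c -> cont_within (fun z => a <= z <= c) L x) ->
  (forall x, a < x < c -> derivable_pt_lim L x (d x)) ->
  (forall x, a < x < c -> d x >= 0) -> L a <= L c.
Proof.
  intros Hac Hc Hd Hp.
  destruct (Req_dec a c) as [->|Hne]; [lra|].
  assert (Hlt : a < c) by lra.
  destruct (Rle_dec (L a) (L c)) as [ok|nok]; auto. exfalso.
  set (del := (L a - L c) / 3).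
  assert (Hdel : del > 0) by (unfold del; lra).
  destruct (Hc a ltac:(lra) del Hdel) as [d1 [Hd1 H1]].
  destruct (Hc c ltac:(lra) del Hdel) as [d2 [Hd2 H2]].
  set (r := Rmin (Rmin d1 d2) ((c - a) / 3)).
  assert (Hr : r > 0) by (unfold r; repeat apply Rmin_pos; lra).
  assert (Hr1 : r <= d1) by (unfold r; eapply Rle_trans; [apply Rmin_l|apply Rmin_l]).
  assert (Hr2 : r <= d2) by (unfold r; eapply Rle_trans; [apply Rmin_l|apply Rmin_r]).
  assert (Hr3 : r <= (c - a) / 3) by (unfold r; apply Rmin_r).
  set (a' := a + r / 2). set (c' := c - r / 2).
  assert (Ha' : Rabs (L a' - L a) < del).
  { apply H1. unfold a'; lra. unfold a'. rewrite Rabs_right; lra. }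
  assert (Hc' : Rabs (L c' - L c) < del).
  { apply H2. unfold c'; lra. unfold c'. rewrite Rabs_left; lra. }
  destruct (MVT_gen L a' c' d) as [xi [Hxi Heq]].
  - intros x Hx. apply is_derive_Reals. apply Hd.
    rewrite Rmin_left in Hx by (unfold a', c'; lra). rewrite Rmax_right in Hx by (unfold a', c'; lra).
    unfold a', c' in Hx; lra.
  - intros x Hx. 
    rewrite Rmin_left in Hx by (unfold a', c'; lra). rewrite Rmax_right in Hx by (unfold a', c'; lra).
    apply derivable_continuous_pt. exists (d x). apply Hd. unfold a', c' in Hx; lra.
  - rewrite Rmin_left in Hxi by (unfold a', c'; lra). rewrite Rmax_right in Hxi by (unfold a', c'; lra).
    assert (d xi >= 0) by (apply Hp; unfold a', c' in Hxi; lra).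
    assert (c' - a' > 0) by (unfold a', c'; lra).
    assert (L c' - L a' >= 0) by (rewrite Heq; nra).
    apply Rabs_def2 in Ha'. apply Rabs_def2 in Hc'. unfold del in *. lra.
Qed.

Lemma clamp_cont (f : R -> R) a b z : a <= b -> a <= z <= b ->
  cont_within (fun x => a <= x <= b) f z ->
  continuity_pt (fun x => f (Rmax a (Rmin x b))) z.
Proof.
  intros Hab Hz H. apply (proj2 (cpt_eps _ z)). intros eps He. destruct (H eps He) as [d [Hd H1]].
  exists d; split; auto. intros x Hx.
  assert (E : Rmax a (Rmin z b) = z).
  { rewrite Rmin_left by lra. rewrite Rmax_right by lra. auto. }
  rewrite E. apply H1.
  - split. apply Rmax_l. apply Rmax_lub. lra. apply Rmin_r.
  - assert (Hc: Rabs (Rmax a (Rmin x b) - z) <= Rabs (x - z)).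
    { unfold Rmax, Rmin; repeat destruct Rle_dec; unfold Rabs; repeat destruct Rcase_abs; lra. }
    lra.
Qed.

Lemma ex_RInt_within f a b : a <= b ->
  (forall x, a <= x <= b -> cont_within (fun z => a <= z <= b) f x) -> ex_RInt f a b.
Proof.
  intros Hab H.
  apply (@ex_RInt_ext R_NormedModule (fun x => f (Rmax a (Rmin x b))) f a b).
  { intros x Hx. rewrite Rmin_left in Hx by lra. rewrite Rmax_right in Hx by lra.
    rewrite Rmin_left by lra. rewrite Rmax_right by lra. auto. }
  apply (@ex_RInt_continuous R_CompleteNormedModule). intros z Hz.
  rewrite Rmin_left in Hz by lra. rewrite Rmax_right in Hz by lra.
  apply continuity_pt_filterlim. apply clamp_cont; auto.
Qed.


Lemma cw_sub (S1 S2 : R -> Prop) f x : (forall z, S2 z -> S1 z) -> cont_within S1 f x -> cont_within S2 f x.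
Proof. intros HS H eps He. destruct (H eps He) as [d [Hd H1]]. exists d; split; auto. Qed.

Lemma ftc_within f a y : a < y -> (forall x, a <= x -> cont_within (fun z => a <= z) f x) ->
  derivable_pt_lim (fun z => RInt f a z) y (f y).
Proof.
  intros Hy Hc. apply is_derive_Reals.
  apply (@is_derive_RInt R_NormedModule f (fun z => RInt f a z) a y).
  - assert (Hp : 0 < y - a) by lra. exists (mkposreal _ Hp). intros z Hz.
    unfold ball in Hz; simpl in Hz; unfold AbsRing_ball, abs, minus, plus, opp in Hz; simpl in Hz.
    apply (@RInt_correct R_CompleteNormedModule). apply ex_RInt_within.
    apply Rabs_def2 in Hz. lra.
    intros x Hx. apply cw_sub with (S1 := fun z => a <= z). intros; lra. apply Hc; lra.
  - apply continuity_pt_filterlim. apply (cpt_of_cw (fun z => a <= z) f y (y - a)). lra.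
    intros z Hz. apply Rabs_def2 in Hz. lra. apply Hc; lra.
Qed.

Lemma lim_bound (u : nat -> R) l a b N : Un_cv u l -> (forall n, (n >= N)%nat -> Rabs (u n - a) <= b) ->
  Rabs (l - a) <= b.
Proof.
  intros Hu Hb. destruct (Rle_dec (Rabs (l - a)) b) as [ok|nok]; auto. exfalso.
  assert (He : Rabs (l - a) - b > 0) by lra.
  destruct (Hu _ He) as [N1 HN1]. specialize (HN1 (max N N1) (Nat.le_max_r _ _)).
  specialize (Hb (max N N1) (Nat.le_max_l _ _)). unfold R_dist in HN1.
  assert (Rabs (l - a) <= Rabs (u (max N N1) - l) + Rabs (u (max N N1) - a)).
  { replace (l - a) with (- (u (max N N1) - l) + (u (max N N1) - a)) by ring.
    eapply Rle_trans. apply Rabs_triang. rewrite Rabs_Ropp. lra. }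
  lra.
Qed.

Lemma lim_ge (u : nat -> R) l a N : Un_cv u l -> (forall n, (n >= N)%nat -> a <= u n) -> a <= l.
Proof.
  intros Hu Hb. destruct (Rle_dec a l) as [ok|nok]; auto. exfalso.
  assert (He : a - l > 0) by lra.
  destruct (Hu _ He) as [N1 HN1]. specialize (HN1 (max N N1) (Nat.le_max_r _ _)).
  specialize (Hb (max N N1) (Nat.le_max_l _ _)). unfold R_dist in HN1.
  apply Rabs_def2 in HN1. lra.
Qed.

Lemma mvt_bound (g dg : R -> R) t r s e : r > 0 -> Rabs (s - t) < r ->
  (forall x, Rabs (x - t) < r -> derivable_pt_lim g x (dg x)) ->
  (forall x, Rabs (x - t) < r -> Rabs (dg x) <= e) ->
  Rabs (g s - g t) <= e * Rabs (s - t).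
Proof.
  intros Hr Hs Hd Hb.
  assert (Hin : forall x, Rmin t s <= x <= Rmax t s -> Rabs (x - t) < r).
  { intros x Hx. unfold Rmin, Rmax in Hx. destruct Rle_dec;
    apply Rabs_def2 in Hs; apply Rabs_def1; lra. }
  destruct (MVT_gen g t s dg) as [c [Hc Heq]].
  - intros x Hx. apply is_derive_Reals. apply Hd. apply Hin. lra.
  - intros x Hx. apply derivable_continuous_pt. exists (dg x). apply Hd. apply Hin. lra.
  - replace (g s - g t) with (- (g t - g s)) by ring. rewrite Rabs_Ropp.
    replace (g t - g s) with (- (dg c * (s - t))) by lra. rewrite Rabs_Ropp, Rabs_mult.
    apply Rmult_le_compat_r. apply Rabs_pos. apply Hb. apply Hin; auto.
Qed.

Lemma unif_deriv (f df : nat -> R -> R) (F : R -> R) (D t r : R) : r > 0 ->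
  (forall n s, Rabs (s - t) < r -> derivable_pt_lim (f n) s (df n s)) ->
  (forall s, Rabs (s - t) < r -> Un_cv (fun n => f n s) (F s)) ->
  (forall e, e > 0 -> exists N, forall n m s, (n >= N)%nat -> (m >= N)%nat -> Rabs (s - t) < r ->
      Rabs (df n s - df m s) <= e) ->
  Un_cv (fun n => df n t) D ->
  derivable_pt_lim F t D.
Proof.
  intros Hr Hd Hcv Hcau HD eps Heps.
  set (e := eps / 4). assert (He : e > 0) by (unfold e; lra).
  destruct (Hcau e He) as [N HN].
  assert (C1 : forall s, Rabs (s - t) < r ->
     Rabs ((F s - F t) - (f N s - f N t)) <= e * Rabs (s - t)).
  { intros s Hs.
    apply (lim_bound (fun n => f n s - f n t) _ _ _ N).
    - apply CV_minus; apply Hcv; auto. rewrite Rminus_diag, Rabs_R0; lra.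
    - intros n Hn.
      pose proof (mvt_bound (fun x => f n x - f N x) (fun x => df n x - df N x) t r s e Hr Hs) as Hm.
      assert (Hm1 : forall x, Rabs (x - t) < r -> derivable_pt_lim (fun x => f n x - f N x) x (df n x - df N x)).
      { intros x Hx. apply derivable_pt_lim_minus; apply Hd; auto. }
      assert (Hm2 : forall x, Rabs (x - t) < r -> Rabs (df n x - df N x) <= e).
      { intros x Hx. apply HN; auto. }
      specialize (Hm Hm1 Hm2).
      cbv beta in Hm. replace (f n s - f n t - (f N s - f N t)) with (f n s - f N s - (f n t - f N t)) by ring.
      exact Hm. }
  assert (C2 : Rabs (D - df N t) <= e).
  { apply (lim_bound (fun n => df n t) _ _ _ N); auto. intros n Hn. apply HN; auto.
    rewrite Rminus_diag, Rabs_R0; lra. }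
  assert (Htt : Rabs (t - t) < r) by (rewrite Rminus_diag, Rabs_R0; lra).
  destruct (Hd N t Htt e He) as [d1 Hd1].
  assert (Hm : 0 < Rmin d1 r) by (apply Rmin_pos; [apply (cond_pos d1)|lra]).
  exists (mkposreal _ Hm). intros h Hh Hh2. simpl in Hh2.
  assert (Hh1 : Rabs h < d1) by (eapply Rlt_le_trans; [exact Hh2|apply Rmin_l]).
  assert (Hhr : Rabs (t + h - t) < r).
  { replace (t + h - t) with h by ring. eapply Rlt_le_trans; [exact Hh2|apply Rmin_r]. }
  specialize (C1 _ Hhr). specialize (Hd1 h Hh Hh1).
  replace (t + h - t) with h in C1 by ring.
  assert (Hah : Rabs h > 0) by (apply Rabs_pos_lt; auto).
  assert (C1' : Rabs ((F (t + h) - F t) / h - (f N (t + h) - f N t) / h) <= e).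
  { replace ((F (t + h) - F t) / h - (f N (t + h) - f N t) / h) with
      (((F (t + h) - F t) - (f N (t + h) - f N t)) / h) by (field; auto).
    unfold Rdiv. rewrite Rabs_mult, Rabs_Rinv; auto.
    apply (Rmult_le_reg_r (Rabs h)); auto. rewrite Rmult_assoc, Rinv_l by lra. lra. }
  replace ((F (t + h) - F t) / h - D) with
    (((F (t + h) - F t) / h - (f N (t + h) - f N t) / h) + ((f N (t + h) - f N t) / h - df N t)
     - (D - df N t)) by ring.
  eapply Rle_lt_trans. apply Rabs_triang. rewrite Rabs_Ropp.
  eapply Rle_lt_trans. apply Rplus_le_compat_r. apply Rabs_triang.
  unfold e in *. lra.
Qed.


Lemma Rint_RInt f a b : ex_RInt f a b -> Rint f a b = RInt f a b.
Proof.
  intros H. unfold Rint. destruct excluded_middle_informative as [e|n].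
  - destruct constructive_indefinite_description as [v [pr Hv]]. simpl.
    rewrite <- Hv. symmetry. apply RInt_Reals.
  - exfalso. apply n. exists (RInt f a b). exists (ex_RInt_Reals_0 _ _ _ H).
    symmetry; apply RInt_Reals.
Qed.

Lemma lim_inf_unique F l1 l2 : has_lim_inf F l1 -> has_lim_inf F l2 -> l1 = l2.
Proof.
  intros H1 H2. destruct (Req_dec l1 l2) as [ok|ne]; auto. exfalso.
  assert (He : Rabs (l1 - l2) / 2 > 0) by (apply Rdiv_lt_0_compat; [apply Rabs_pos_lt; lra|lra]).
  destruct (H1 _ He) as [M1 HM1]. destruct (H2 _ He) as [M2 HM2].
  specialize (HM1 (Rmax M1 M2) (Rle_ge _ _ (Rmax_l _ _))).
  specialize (HM2 (Rmax M1 M2) (Rle_ge _ _ (Rmax_r _ _))).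
  assert (Rabs (l1 - l2) <= Rabs (F (Rmax M1 M2) - l1) + Rabs (F (Rmax M1 M2) - l2)).
  { replace (l1 - l2) with (- (F (Rmax M1 M2) - l1) + (F (Rmax M1 M2) - l2)) by ring.
    eapply Rle_trans. apply Rabs_triang. rewrite Rabs_Ropp. lra. }
  lra.
Qed.

Lemma RintInf_eq f a l : has_lim_inf (fun b => Rint f a b) l -> RintInf f a = l.
Proof.
  intros H. unfold RintInf. destruct excluded_middle_informative as [e|n].
  - destruct constructive_indefinite_description as [v Hv]. simpl.
    eapply lim_inf_unique; eauto.
  - exfalso. apply n. exists l; auto.
Qed.

Lemma has_lim_inf_ext F1 F2 l a : (forall b, a <= b -> F1 b = F2 b) -> has_lim_inf F1 l -> has_lim_inf F2 l.
Proof.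
  intros He H eps Hp. destruct (H eps Hp) as [M HM]. exists (Rmax M a). intros b Hb.
  rewrite <- He. apply HM. pose proof (Rmax_l M a). lra. pose proof (Rmax_r M a). lra.
Qed.

Lemma incr_lim F a M : (forall x y, a <= x <= y -> F x <= F y) -> (forall x, a <= x -> F x <= M) ->
  exists l, has_lim_inf F l /\ (forall x, a <= x -> F x <= l).
Proof.
  intros Hi Hb.
  set (E := fun v => exists x, a <= x /\ v = F x).
  assert (Hbd : bound E) by (exists M; intros v [x [Hx ->]]; auto).
  assert (Hne : exists v, E v) by (exists (F a); exists a; split; [lra|auto]).
  destruct (completeness E Hbd Hne) as [l [Hub Hlub]].
  exists l. split.
  - intros eps He. destruct (Rle_dec l (l - eps / 2)) as [bad|ok]; [lra|].
    assert (exists x, a <= x /\ F x > l - eps).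
    { apply Classical_Prop.NNPP. intros Hn. apply ok. apply Hlub. intros v [x [Hx ->]].
      destruct (Rle_dec (F x) (l - eps/2)); auto. exfalso. apply Hn. exists x. split; auto. lra. }
    destruct H as [x0 [Hx0 HF0]]. exists x0. intros b Hb0.
    assert (F x0 <= F b) by (apply Hi; lra). assert (F b <= l) by (apply Hub; exists b; split; auto; lra).
    rewrite Rabs_left1; lra.
  - intros x Hx. apply Hub. exists x; auto.
Qed.

Lemma lim_inf_ge F a l : (forall x y, a <= x <= y -> F x <= F y) -> has_lim_inf F l ->
  forall x, a <= x -> F x <= l.
Proof.
  intros Hi Hl x Hx. destruct (Rle_dec (F x) l) as [ok|nok]; auto. exfalso.
  assert (He : F x - l > 0) by lra. destruct (Hl _ He) as [M HM].
  specialize (HM (Rmax M x) (Rle_ge _ _ (Rmax_l _ _))).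
  assert (F x <= F (Rmax M x)) by (apply Hi; split; auto; apply Rmax_r).
  apply Rabs_def2 in HM. lra.
Qed.

Lemma RInt_abs_le f a b M : a <= b -> ex_RInt f a b -> (forall x, a < x < b -> Rabs (f x) <= M) ->
  Rabs (RInt f a b) <= M * (b - a).
Proof.
  intros Hab He Hb.
  assert (Hc : ex_RInt (fun _ => M) a b) by apply ex_RInt_const.
  assert (RInt (fun _ => M) a b = M * (b - a)).
  { rewrite RInt_const. unfold scal; simpl. unfold mult; simpl. ring. }
  assert (Hc' : ex_RInt (fun x => - M) a b) by apply ex_RInt_const.
  assert (RInt (fun _ => - M) a b = - M * (b - a)).
  { rewrite RInt_const. unfold scal; simpl. unfold mult; simpl. ring. }
  apply Rabs_le. split.
  - replace (- (M * (b - a))) with (- M * (b - a)) by ring. rewrite <- H0.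
    apply RInt_le; auto. intros x Hx. specialize (Hb x Hx). apply Rabs_le_between in Hb. lra.
  - rewrite <- H. apply RInt_le; auto. intros x Hx. specialize (Hb x Hx). apply Rabs_le_between in Hb. lra.
Qed.

Lemma RInt_cw f a : (forall x, a <= x -> cont_within (fun z => a <= z) f x) ->
  forall x, a <= x -> cont_within (fun z => a <= z) (fun z => RInt f a z) x.
Proof.
  intros Hc x Hx. destruct (Rle_lt_or_eq_dec _ _ Hx) as [Hlt|Heq].
  - apply cw_of_cpt. apply derivable_continuous_pt. exists (f x). apply ftc_within; auto.
  - subst x. intros eps He. destruct (Hc a (Rle_refl a) 1 Rlt_0_1) as [d [Hd H1]].
    set (M := Rabs (f a) + 1). assert (HM : M > 0) by (unfold M; pose proof (Rabs_pos (f a)); lra).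
    exists (Rmin d (eps / M)). split. apply Rmin_pos; auto. apply Rdiv_lt_0_compat; lra.
    intros z Hz Hzd. rewrite RInt_point. unfold zero; simpl. rewrite Rminus_0_r.
    assert (Hzd1 : Rabs (z - a) < d) by (eapply Rlt_le_trans; [exact Hzd|apply Rmin_l]).
    assert (Hzd2 : Rabs (z - a) < eps / M) by (eapply Rlt_le_trans; [exact Hzd|apply Rmin_r]).
    rewrite Rabs_right in Hzd1, Hzd2 by lra.
    eapply Rle_lt_trans. apply (RInt_abs_le f a z M); auto.
    apply ex_RInt_within; auto. intros y Hy. apply cw_sub with (S1 := fun z => a <= z). intros; lra. apply Hc; lra.
    intros y Hy. assert (Hy2 : Rabs (f y - f a) < 1) by (apply H1; [lra|rewrite Rabs_right; lra]).
    unfold M. apply Rabs_def2 in Hy2. revert Hy2. unfold Rabs. repeat destruct Rcase_abs; lra.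
    apply (Rmult_lt_compat_l M) in Hzd2; auto. replace (M * (eps / M)) with eps in Hzd2 by (field; lra). lra.
Qed.


Lemma dmul f g x a b : derivable_pt_lim f x a -> derivable_pt_lim g x b ->
  derivable_pt_lim (fun y => f y * g y) x (a * g x + f x * b).
Proof. intros; apply (derivable_pt_lim_mult f g); auto. Qed.
Lemma dplus f g x a b : derivable_pt_lim f x a -> derivable_pt_lim g x b ->
  derivable_pt_lim (fun y => f y + g y) x (a + b).
Proof. intros; apply (derivable_pt_lim_plus f g); auto. Qed.
Lemma dminus f g x a b : derivable_pt_lim f x a -> derivable_pt_lim g x b ->
  derivable_pt_lim (fun y => f y - g y) x (a - b).
Proof. intros; apply (derivable_pt_lim_minus f g); auto. Qed.
Lemma dconst c x : derivable_pt_lim (fun _ => c) x 0.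
Proof. apply (derivable_pt_lim_const c). Qed.
Lemma did x : derivable_pt_lim (fun y => y) x 1.
Proof. apply derivable_pt_lim_id. Qed.
Lemma dval f x l l' : derivable_pt_lim f x l -> l = l' -> derivable_pt_lim f x l'.
Proof. intros H ->; auto. Qed.
Lemma dloc f g x l d : d > 0 -> (forall z, Rabs (z - x) < d -> f z = g z) ->
  derivable_pt_lim f x l -> derivable_pt_lim g x l.
Proof.
  intros Hd He H eps Hp. destruct (H eps Hp) as [d1 H1].
  assert (Hm : 0 < Rmin d d1) by (apply Rmin_pos; [lra|apply (cond_pos d1)]).
  exists (mkposreal _ Hm). intros h Hh Hh2. simpl in Hh2.
  rewrite <- !He. apply H1; auto. eapply Rlt_le_trans; [exact Hh2|apply Rmin_r].
  rewrite Rminus_diag, Rabs_R0; lra.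
  replace (x + h - x) with h by ring. eapply Rlt_le_trans; [exact Hh2|apply Rmin_l].
Qed.

Lemma dexpn x : derivable_pt_lim (fun y => exp (- y)) x (- exp (- x)).
Proof.
  apply (dval (comp exp (fun y => - y)) x (exp (- x) * (-1))).
  apply derivable_pt_lim_comp. apply (dloc (fun y => 0 - y) _ _ _ 1). lra. intros; ring.
  apply (dval _ _ (0 - 1)). apply dminus. apply dconst. apply did. ring.
  apply derivable_pt_lim_exp. ring.
Qed.
Lemma cpt_loc f g x d : d > 0 -> (forall z, Rabs (z - x) < d -> f z = g z) ->
  continuity_pt f x -> continuity_pt g x.
Proof.
  intros Hd He H. apply (proj2 (cpt_eps g x)). intros eps Hp.
  destruct (proj1 (cpt_eps f x) H eps Hp) as [d1 [Hd1 H1]].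
  exists (Rmin d d1). split. apply Rmin_pos; lra. intros z Hz.
  rewrite <- !He. apply H1. eapply Rlt_le_trans; [exact Hz|apply Rmin_r].
  rewrite Rminus_diag, Rabs_R0; lra. eapply Rlt_le_trans; [exact Hz|apply Rmin_l].
Qed.

Lemma cpt_of_d f x l : derivable_pt_lim f x l -> continuity_pt f x.
Proof. intros H. apply derivable_continuous_pt. exists l; auto. Qed.

Lemma ex_RInt_cpt f a b : a <= b -> (forall x, a <= x <= b -> continuity_pt f x) -> ex_RInt f a b.
Proof.
  intros Hab H. apply (@ex_RInt_continuous R_CompleteNormedModule). intros z Hz.
  rewrite Rmin_left in Hz by lra. rewrite Rmax_right in Hz by lra.
  apply continuity_pt_filterlim. auto.
Qed.

Lemma cw_mult S f g x : cont_within S f x -> cont_within S g x -> cont_within S (fun y => f y * g y) x.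
Proof.
  intros Hf Hg eps He.
  set (M := Rabs (f x) + Rabs (g x) + 1).
  assert (HM : M > 0) by (unfold M; pose proof (Rabs_pos (f x)); pose proof (Rabs_pos (g x)); lra).
  set (e := Rmin 1 (eps / (4 * M))).
  assert (He1 : e > 0) by (unfold e; apply Rmin_pos; [lra|apply Rdiv_lt_0_compat; lra]).
  destruct (Hf e He1) as [d1 [Hd1 H1]]. destruct (Hg e He1) as [d2 [Hd2 H2]].
  exists (Rmin d1 d2). split. apply Rmin_pos; lra.
  intros z Sz Hz.
  specialize (H1 z Sz (Rlt_le_trans _ _ _ Hz (Rmin_l _ _))).
  specialize (H2 z Sz (Rlt_le_trans _ _ _ Hz (Rmin_r _ _))).
  replace (f z * g z - f x * g x) with ((f z - f x) * g z + f x * (g z - g x)) by ring.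
  eapply Rle_lt_trans. apply Rabs_triang. rewrite !Rabs_mult.
  assert (Hgz : Rabs (g z) <= Rabs (g x) + 1).
  { replace (g z) with (g x + (g z - g x)) by ring. eapply Rle_trans. apply Rabs_triang.
    assert (e <= 1) by (unfold e; apply Rmin_l). lra. }
  assert (He2 : e <= eps / (4 * M)) by (unfold e; apply Rmin_r).
  assert (e * M <= eps / 4).
  { apply (Rmult_le_compat_r M) in He2; [|lra]. replace (eps / (4 * M) * M) with (eps / 4) in He2 by (field; lra). lra. }
  pose proof (Rabs_pos (f z - f x)). pose proof (Rabs_pos (f x)). pose proof (Rabs_pos (g z - g x)).
  pose proof (Rabs_pos (g x)). pose proof (Rabs_pos (g z)).
  assert (Rabs (f z - f x) * Rabs (g z) <= e * M).
  { apply Rmult_le_compat; try lra. unfold M; lra. }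
  assert (Rabs (f x) * Rabs (g z - g x) <= e * M).
  { rewrite Rmult_comm. apply Rmult_le_compat; try lra. unfold M; lra. }
  lra.
Qed.

Lemma cw_plus S f g x : cont_within S f x -> cont_within S g x -> cont_within S (fun y => f y + g y) x.
Proof.
  intros Hf Hg eps He. destruct (Hf (eps/2) ltac:(lra)) as [d1 [Hd1 H1]].
  destruct (Hg (eps/2) ltac:(lra)) as [d2 [Hd2 H2]].
  exists (Rmin d1 d2). split. apply Rmin_pos; lra. intros z Sz Hz.
  specialize (H1 z Sz (Rlt_le_trans _ _ _ Hz (Rmin_l _ _))).
  specialize (H2 z Sz (Rlt_le_trans _ _ _ Hz (Rmin_r _ _))).
  replace (f z + g z - (f x + g x)) with ((f z - f x) + (g z - g x)) by ring.
  eapply Rle_lt_trans. apply Rabs_triang. lra.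
Qed.

Lemma cw_const S c x : cont_within S (fun _ => c) x.
Proof. intros eps He. exists 1; split; [lra|]. intros. rewrite Rminus_diag, Rabs_R0; lra. Qed.

Lemma cw_minus S f g x : cont_within S f x -> cont_within S g x -> cont_within S (fun y => f y - g y) x.
Proof.
  intros Hf Hg. apply cw_plus; auto. intros eps He. destruct (Hg eps He) as [d [Hd H1]]. exists d; split; auto.
  intros z Hz Hd'. specialize (H1 z Hz Hd'). replace (- g z - - g x) with (- (g z - g x)) by ring.
  rewrite Rabs_Ropp; auto.
Qed.
Lemma cw_ext S f g x : (forall z, f z = g z) -> cont_within S f x -> cont_within S g x.
Proof. intros E H eps He. destruct (H eps He) as [d [Hd H1]]. exists d; split; auto. intros. rewrite <- !E; auto. Qed.
Lemma cw_of_d S f x l : derivable_pt_lim f x l -> cont_within S f x.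
Proof. intros. apply cw_of_cpt. eapply cpt_of_d; eauto. Qed.

Lemma cmul f g x : continuity_pt f x -> continuity_pt g x -> continuity_pt (fun y => f y * g y) x.
Proof. intros; apply (continuity_pt_mult f g); auto. Qed.
Lemma cplus f g x : continuity_pt f x -> continuity_pt g x -> continuity_pt (fun y => f y + g y) x.
Proof. intros; apply (continuity_pt_plus f g); auto. Qed.
Lemma cminus f g x : continuity_pt f x -> continuity_pt g x -> continuity_pt (fun y => f y - g y) x.
Proof. intros; apply (continuity_pt_minus f g); auto. Qed.
Lemma cconst c x : continuity_pt (fun _ => c) x.
Proof. apply continuity_pt_const. intros a b; reflexivity. Qed.
Lemma cid x : continuity_pt (fun y => y) x.
Proof. apply derivable_continuous_pt. apply derivable_pt_id. Qed.
Lemma cpow2 f x : continuity_pt f x -> continuity_pt (fun y => (f y) ^ 2) x.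
Proof. intros. apply (cpt_loc (fun y => f y * f y)) with 1. lra. intros; ring. apply cmul; auto. Qed.
Lemma copp f x : continuity_pt f x -> continuity_pt (fun y => - f y) x.
Proof. intros; apply (continuity_pt_opp f); auto. Qed.


Section Main.
Variables (T : R) (U : R -> R) (Unorm : R) (w wt wy wyy : R -> R -> R) (C : R).
Hypothesis HT : T > 0.
Hypothesis HUneg : forall x, 0 <= x <= T -> U x <= 0.
Hypothesis HUnorm : is_lub (fun v => exists x, 0 <= x <= T /\ v = Rabs (U x)) Unorm.
Hypothesis Hwy : forall t y, 0 < t < T -> 0 < y -> derivable_pt_lim (w t) y (wy t y).
Hypothesis Hwyy : forall t y, 0 < t < T -> 0 < y -> derivable_pt_lim (wy t) y (wyy t y).
Hypothesis Hwc : cont2_on (fun t y => 0 < t < T /\ 0 <= y) w.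
Hypothesis Hwpos : forall t y, 0 < t < T -> 0 < y -> w t y >= 0.
Hypothesis Hbc0 : forall t, 0 < t < T -> w t 0 = - U t.
Hypothesis HC : forall t y, 0 < t < T -> 0 < y -> (Rabs (w t y) + Rabs (wy t y)) * exp y <= C.
Hypothesis Hwt : forall t y, 0 < t < T -> 0 < y -> derivable_pt_lim (fun s => w s y) t (wt t y).
Hypothesis Hwtc : cont2_on (fun t y => 0 < t < T /\ 0 < y) wt.
Hypothesis Hpde : forall t y, 0 < t < T -> 0 < y ->
      wt t y - (w t y) ^ 2
      + Rint (fun y' => w t y' + U t) 0 y * wy t y
      - 2 * U t * w t y
      - RintInf (w t) y
      - wyy t y = 0.

Variables (rho drho : R -> R) (Cf beta K L A M0 B : R) (f df ddf g dg ddg eta deta : R -> R).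
Hypothesis HCf : Cf > 0.
Hypothesis Hbeta : 0 < beta < 1.
Hypothesis Hrho0 : forall y, 0 <= y -> 0 <= rho y.
Hypothesis Hdrho : forall y, 0 <= y -> deriv_within (fun z => 0 <= z) rho (drho y) y.
Hypothesis Hdrhoc : forall y, 0 <= y -> cont_within (fun z => 0 <= z) drho y.
Hypothesis HK : forall y, 0 <= y -> Rabs (rho y) <= K /\ Rabs (drho y) <= K.
Hypothesis HL : forall y z, 0 <= y -> 0 <= z -> Rabs (drho y - drho z) <= L * Rabs (y - z).
Hypothesis HL1 : L1_on_half rho 0.
Hypothesis HA : 0 < A.
Hypothesis HAM : A < M0.
Hypothesis HMB : M0 < B.
Hypothesis Hrf : forall y, 0 <= y <= B -> rho y = f y.
Hypothesis Hrg : forall y, B < y -> rho y = g y.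
Hypothesis Hdf : forall y, 0 <= y <= B -> deriv_within (fun z => 0 <= z <= B) f (df y) y.
Hypothesis Hddf : forall y, 0 <= y <= B -> y <> A -> deriv_within (fun z => 0 <= z <= B /\ z <> A) df (ddf y) y.
Hypothesis Hdg : forall y, M0 <= y -> deriv_within (fun z => M0 <= z) g (dg y) y.
Hypothesis Hddg : forall y, M0 <= y -> deriv_within (fun z => M0 <= z) dg (ddg y) y.
Hypothesis Heta : forall x, derivable_pt_lim eta x (deta x).
Hypothesis Heta0 : forall x, x < M0 -> eta x = 0.
Hypothesis Heta1 : forall x, B < x -> eta x = 1.
Hypothesis Hdeta : forall x, 0 <= deta x <= 2 / (B - M0).
Hypothesis Hf0 : f 0 = 0.
Hypothesis Hfpos : forall y, 0 < y <= B -> f y > 0.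
Hypothesis HF2 : forall y, 0 <= y <= B -> y * df y <= Cf * f y.
Hypothesis HF3 : forall y, 0 <= y <= B -> y <> A -> Rint f 0 y + ddf y >= 0.
Hypothesis HF4 : forall y, 0 <= y <= B -> y <> A -> ddf y <= 0.
Hypothesis Hgpos : forall y, M0 < y -> g y > 0.
Hypothesis HG2 : forall y, M0 < y -> dg y < 0 /\ ddg y > 0.
Hypothesis HG3 : forall y, B <= y -> (dg y) ^ 2 / (g y * ddg y) <= beta.
Hypothesis HFG1 : f B = g B /\ df B = dg B.
Hypothesis HFG2 : forall y, M0 <= y <= B ->
        eta y * (dg y) ^ 2 / (f y * ddg y) <= beta /\
        2 * deta y * dg y + eta y * ddg y - ddf y >= 0.

Lemma U_bd s : 0 < s < T -> Rabs (U s) <= Unorm.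
Proof. intros Hs. destruct HUnorm as [Hub _]. apply Hub. exists s. split; auto; lra. Qed.
Lemma Unorm_ge0 : 0 <= Unorm.
Proof. destruct HUnorm as [Hub _]. eapply Rle_trans; [apply (Rabs_pos (U 0))|]. apply Hub. exists 0; split; auto; lra. Qed.
Lemma U_le0 s : 0 < s < T -> U s <= 0.
Proof. intros; apply HUneg; lra. Qed.
Lemma U_ge s : 0 < s < T -> - Unorm <= U s.
Proof. intros Hs. pose proof (U_bd s Hs). apply Rabs_le_between in H. lra. Qed.

Lemma C_ge0 : 0 <= C.
Proof.
  assert (H := HC (T/2) 1 ltac:(lra) ltac:(lra)). pose proof (Rabs_pos (w (T/2) 1)).
  pose proof (Rabs_pos (wy (T/2) 1)). pose proof (exp_pos 1). nra.
Qed.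

Lemma w_bd s y : 0 < s < T -> 0 < y -> Rabs (w s y) <= C * exp (- y).
Proof.
  intros Hs Hy. specialize (HC s y Hs Hy). pose proof (Rabs_pos (wy s y)).
  rewrite exp_Ropp. pose proof (exp_pos y).
  apply (Rmult_le_reg_r (exp y)); auto. rewrite Rmult_assoc, Rinv_l by lra. nra.
Qed.
Lemma wy_bd s y : 0 < s < T -> 0 < y -> Rabs (wy s y) <= C * exp (- y).
Proof.
  intros Hs Hy. specialize (HC s y Hs Hy). pose proof (Rabs_pos (w s y)).
  rewrite exp_Ropp. pose proof (exp_pos y).
  apply (Rmult_le_reg_r (exp y)); auto. rewrite Rmult_assoc, Rinv_l by lra. nra.
Qed.
Lemma expn_le1 y : 0 <= y -> exp (- y) <= 1.
Proof. intros. rewrite <- exp_0. destruct (Req_dec y 0). subst; rewrite Ropp_0; lra. left; apply exp_increasing; lra. Qed.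
Lemma w_bdC s y : 0 < s < T -> 0 < y -> Rabs (w s y) <= C.
Proof. intros. pose proof (w_bd s y H H0). pose proof (expn_le1 y). pose proof C_ge0. pose proof (exp_pos (-y)). nra. Qed.
Lemma wy_bdC s y : 0 < s < T -> 0 < y -> Rabs (wy s y) <= C.
Proof. intros. pose proof (wy_bd s y H H0). pose proof (expn_le1 y). pose proof C_ge0. pose proof (exp_pos (-y)). nra. Qed.

Lemma w_nonneg s y : 0 < s < T -> 0 <= y -> 0 <= w s y.
Proof.
  intros Hs Hy. destruct (Req_dec y 0) as [->|Hn]. rewrite Hbc0; auto. pose proof (U_le0 s Hs); lra.
  pose proof (Hwpos s y Hs ltac:(lra)); lra.
Qed.

Lemma w_cw s y : 0 < s < T -> 0 <= y -> cont_within (fun z => 0 <= z) (w s) y.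
Proof.
  intros Hs Hy eps He. destruct (Hwc s y (conj Hs Hy) eps He) as [d [Hd H1]].
  exists d; split; auto. intros z Hz Hzd. apply H1; auto. rewrite Rminus_diag, Rabs_R0; lra.
Qed.
Lemma w_cpt s y : 0 < s < T -> 0 < y -> continuity_pt (w s) y.
Proof. intros. eapply cpt_of_d. apply Hwy; auto. Qed.
Lemma wy_cpt s y : 0 < s < T -> 0 < y -> continuity_pt (wy s) y.
Proof. intros. eapply cpt_of_d. apply Hwyy; auto. Qed.

Definition Fs s y := RInt (w s) 0 y.

Lemma Fs_der s y : 0 < s < T -> 0 < y -> derivable_pt_lim (Fs s) y (w s y).
Proof. intros. unfold Fs. apply ftc_within; auto. intros; apply w_cw; auto. Qed.
Lemma Fs_cw s y : 0 < s < T -> 0 <= y -> cont_within (fun z => 0 <= z) (Fs s) y.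
Proof. intros. unfold Fs. apply RInt_cw; auto. intros; apply w_cw; auto. Qed.
Lemma Fs_0 s : Fs s 0 = 0.
Proof. unfold Fs. rewrite RInt_point. reflexivity. Qed.
Lemma Fs_ex s y : 0 < s < T -> 0 <= y -> ex_RInt (w s) 0 y.
Proof.
  intros. apply ex_RInt_within; auto. intros x Hx. apply cw_sub with (S1 := fun z => 0 <= z).
  intros; lra. apply w_cw; auto; lra.
Qed.

Lemma mono0 (Lf d : R -> R) a c : 0 <= a <= c ->
  (forall x, a <= x <= c -> cont_within (fun z => 0 <= z) Lf x) ->
  (forall x, a < x < c -> derivable_pt_lim Lf x (d x)) ->
  (forall x, a < x < c -> d x >= 0) -> Lf a <= Lf c.
Proof.
  intros Hac Hc Hd Hp. apply (mono_within Lf d); auto; try lra.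
  intros x Hx. apply cw_sub with (S1 := fun z => 0 <= z). intros; lra. apply Hc; auto.
Qed.

Lemma Fs_mono s x y : 0 < s < T -> 0 <= x <= y -> Fs s x <= Fs s y.
Proof.
  intros Hs Hxy. apply (mono0 (Fs s) (w s)); auto.
  intros; apply Fs_cw; auto; lra. intros; apply Fs_der; auto; lra.
  intros; apply Hwpos; auto; lra.
Qed.
Lemma Fs_nonneg s y : 0 < s < T -> 0 <= y -> 0 <= Fs s y.
Proof. intros. rewrite <- (Fs_0 s). apply Fs_mono; auto; lra. Qed.

Lemma Fs_diff s x y : 0 < s < T -> 0 <= x <= y -> Fs s y - Fs s x <= C * (exp (- x) - exp (- y)).
Proof.
  intros Hs Hxy.
  assert (H := mono0 (fun z => - C * exp (- z) - Fs s z) (fun z => C * exp (- z) - w s z) x y Hxy).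
  assert (- C * exp (- x) - Fs s x <= - C * exp (- y) - Fs s y); [|lra].
  apply H.
  - intros z Hz. apply cw_plus with (f := fun z => - C * exp (- z)) (g := fun z => - Fs s z).
    apply cw_of_cpt. apply (cpt_of_d _ _ (0 * exp (- z) + - C * - exp (- z))). apply (dmul (fun _ => -C) (fun y => exp (- y))). apply dconst. apply dexpn.
    intros eps He. destruct (Fs_cw s z Hs ltac:(lra) eps He) as [d [Hd H1]]. exists d; split; auto.
    intros z' Hz' Hd'. specialize (H1 z' Hz' Hd'). replace (- Fs s z' - - Fs s z) with (- (Fs s z' - Fs s z)) by ring.
    rewrite Rabs_Ropp; auto.
  - intros z Hz. apply (dval (fun z => - C * exp (- z) - Fs s z) z (0 * exp (- z) + - C * - exp (- z) - w s z)).
    apply dminus. apply (dmul (fun _ => - C) (fun y => exp (- y))). apply dconst. apply dexpn. apply Fs_der; auto; lra. ring.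
  - intros z Hz. pose proof (w_bd s z Hs ltac:(lra)). apply Rabs_le_between in H0. lra.
Qed.

Lemma Fs_le_lin s y : 0 < s < T -> 0 <= y -> Fs s y <= C * y.
Proof.
  intros Hs Hy.
  assert (H := mono0 (fun z => C * z - Fs s z) (fun z => C - w s z) 0 y ltac:(lra)).
  assert (C * 0 - Fs s 0 <= C * y - Fs s y); [|rewrite Fs_0 in H0; lra].
  apply H.
  - intros z Hz. apply cw_plus with (f := fun z => C * z) (g := fun z => - Fs s z).
    apply cw_of_cpt. apply (cpt_of_d _ _ (0 * z + C * 1)). apply (dmul (fun _ => C) (fun y => y)). apply dconst. apply did.
    intros eps He. destruct (Fs_cw s z Hs ltac:(lra) eps He) as [d [Hd H1]]. exists d; split; auto.
    intros z' Hz' Hd'. specialize (H1 z' Hz' Hd'). replace (- Fs s z' - - Fs s z) with (- (Fs s z' - Fs s z)) by ring.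
    rewrite Rabs_Ropp; auto.
  - intros z Hz. apply (dval _ z (0 * z + C * 1 - w s z)).
    apply dminus. apply (dmul (fun _ => C) (fun y => y)). apply dconst. apply did. apply Fs_der; auto; lra. ring.
  - intros z Hz. pose proof (w_bdC s z Hs ltac:(lra)). apply Rabs_le_between in H0. lra.
Qed.


Lemma lim_inf_le F l M c : has_lim_inf F l -> (forall b, b >= M -> F b <= c) -> l <= c.
Proof.
  intros Hl Hb. destruct (Rle_dec l c) as [ok|nok]; auto. exfalso.
  assert (He : l - c > 0) by lra. destruct (Hl _ He) as [M1 HM1].
  specialize (HM1 (Rmax M M1) (Rle_ge _ _ (Rmax_r _ _))).
  specialize (Hb (Rmax M M1) (Rle_ge _ _ (Rmax_l _ _))). apply Rabs_def2 in HM1. lra.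
Qed.
Lemma lim_inf_shift F l c : has_lim_inf F l -> has_lim_inf (fun b => F b - c) (l - c).
Proof.
  intros H eps He. destruct (H eps He) as [M HM]. exists M. intros b Hb.
  replace (F b - c - (l - c)) with (F b - l) by ring. auto.
Qed.

Definition Ls s := RintInf (w s) 0.

Lemma Fs_lim s : 0 < s < T -> has_lim_inf (Fs s) (Ls s) /\ (forall y, 0 <= y -> Fs s y <= Ls s).
Proof.
  intros Hs. destruct (incr_lim (Fs s) 0 C) as [l [Hl Hle]].
  - intros x y Hxy. apply Fs_mono; auto; lra.
  - intros x Hx. pose proof (Fs_diff s 0 x Hs ltac:(lra)). rewrite Fs_0, Ropp_0, exp_0 in H.
    pose proof (exp_pos (- x)). pose proof C_ge0. nra.
  - assert (Ls s = l) as ->; [|split; auto].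
    unfold Ls. apply RintInf_eq. apply has_lim_inf_ext with (F1 := Fs s) (a := 0); auto.
    intros b Hb. unfold Fs. symmetry. apply Rint_RInt. apply Fs_ex; auto.
Qed.

Lemma Fs_chasles s y b : 0 < s < T -> 0 <= y <= b -> RInt (w s) y b = Fs s b - Fs s y.
Proof.
  intros Hs Hyb. unfold Fs.
  assert (H1 : ex_RInt (w s) 0 y) by (apply Fs_ex; auto; lra).
  assert (H2 : ex_RInt (w s) y b).
  { apply ex_RInt_within; try lra. intros x Hx. apply cw_sub with (S1 := fun z => 0 <= z). intros; lra. apply w_cw; auto; lra. }
  assert (E : RInt (w s) 0 y + RInt (w s) y b = RInt (w s) 0 b) by (apply (RInt_Chasles (w s) 0 y b H1 H2)).
  lra.
Qed.

Lemma Rs_eq s y : 0 < s < T -> 0 <= y -> RintInf (w s) y = Ls s - Fs s y.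
Proof.
  intros Hs Hy. apply RintInf_eq. apply has_lim_inf_ext with (F1 := fun b => Fs s b - Fs s y) (a := y).
  - intros b Hb. rewrite Rint_RInt. symmetry. apply Fs_chasles; auto.
    apply ex_RInt_within; try lra. intros x Hx. apply cw_sub with (S1 := fun z => 0 <= z). intros; lra. apply w_cw; auto; lra.
  - apply lim_inf_shift. apply Fs_lim; auto.
Qed.

Lemma Rs_bd s y : 0 < s < T -> 0 <= y -> 0 <= Ls s - Fs s y <= C * exp (- y).
Proof.
  intros Hs Hy. destruct (Fs_lim s Hs) as [Hl Hle]. split.
  - specialize (Hle y Hy). lra.
  - assert (Ls s - Fs s y <= C * exp (-y)); [|lra].
    apply (lim_inf_le (fun b => Fs s b - Fs s y) _ y). apply lim_inf_shift; auto.
    intros b Hb. pose proof (Fs_diff s y b Hs ltac:(lra)). pose proof (exp_pos (-b)). pose proof C_ge0. nra.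
Qed.

Lemma Is_eq s y : 0 < s < T -> 0 <= y -> Rint (fun y' => w s y' + U s) 0 y = Fs s y + U s * y.
Proof.
  intros Hs Hy.
  assert (H1 : ex_RInt (w s) 0 y) by (apply Fs_ex; auto).
  assert (H2 : ex_RInt (fun _ => U s) 0 y) by apply ex_RInt_const.
  rewrite Rint_RInt.
  - assert (E := RInt_plus (w s) (fun _ => U s) 0 y H1 H2). simpl in E.
    assert (E2 : RInt (fun _ => U s) 0 y = U s * y).
    { rewrite RInt_const. unfold scal; simpl; unfold mult; simpl. ring. }
    unfold plus in E; simpl in E. unfold Fs. 
    transitivity (RInt (w s) 0 y + RInt (fun _ => U s) 0 y); [exact E|]. rewrite E2. reflexivity.
  - apply (ex_RInt_plus (w s) (fun _ => U s)); auto.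
Qed.


Lemma rho_cw y : 0 <= y -> cont_within (fun z => 0 <= z) rho y.
Proof. intros. apply (cw_of_dw _ _ (drho y)); auto. Qed.
Lemma rho_0 : rho 0 = 0.
Proof. rewrite Hrf; auto; lra. Qed.
Lemma rho_der y : 0 < y -> derivable_pt_lim rho y (drho y).
Proof. intros. apply (dpt_of_dw (fun z => 0 <= z) rho (drho y) y y); auto. intros z Hz; apply Rabs_def2 in Hz; lra. apply Hdrho; lra. Qed.
Lemma rho_cpt y : 0 < y -> continuity_pt rho y.
Proof. intros. eapply cpt_of_d; apply rho_der; auto. Qed.
Lemma drho_cpt y : 0 < y -> continuity_pt drho y.
Proof. intros. apply (cpt_of_cw (fun z => 0 <= z) drho y y); auto. intros z Hz; apply Rabs_def2 in Hz; lra. apply Hdrhoc; lra. Qed.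
Lemma K_ge0 : 0 <= K.
Proof. destruct (HK 0 ltac:(lra)). pose proof (Rabs_pos (rho 0)); lra. Qed.

Lemma rho_lin y : 0 <= y -> rho y <= K * y.
Proof.
  intros Hy.
  assert (H := mono0 (fun z => K * z - rho z) (fun z => K - drho z) 0 y ltac:(lra)).
  assert (K * 0 - rho 0 <= K * y - rho y); [|rewrite rho_0 in H0; lra].
  apply H.
  - intros z Hz. apply cw_plus with (f := fun z => K * z) (g := fun z => - rho z).
    apply cw_of_cpt. apply (cpt_of_d _ _ (0 * z + K * 1)). apply (dmul (fun _ => K) (fun y => y)). apply dconst. apply did.
    intros eps He. destruct (rho_cw z ltac:(lra) eps He) as [d [Hd H1]]. exists d; split; auto.
    intros z' Hz' Hd'. specialize (H1 z' Hz' Hd'). replace (- rho z' - - rho z) with (- (rho z' - rho z)) by ring.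
    rewrite Rabs_Ropp; auto.
  - intros z Hz. apply (dval _ z (0 * z + K * 1 - drho z)).
    apply dminus. apply (dmul (fun _ => K) (fun y => y)). apply dconst. apply did. apply rho_der; lra. ring.
  - intros z Hz. destruct (HK z ltac:(lra)) as [_ H2]. apply Rabs_le_between in H2. lra.
Qed.

Lemma drho_0 : 0 <= drho 0.
Proof.
  destruct (Rle_dec 0 (drho 0)) as [ok|nok]; auto. exfalso.
  assert (He : - drho 0 > 0) by lra.
  destruct (Hdrho 0 (Rle_refl 0) _ He) as [d [Hd H1]].
  specialize (H1 (d/2) ltac:(lra) ltac:(lra) ltac:(rewrite Rabs_right; lra)).
  rewrite Rplus_0_l, rho_0, Rminus_0_r in H1. apply Rabs_def2 in H1.
  assert (0 <= rho (d/2) / (d/2)) by (apply Rdiv_le_0_compat; [apply Hrho0; lra|lra]). lra.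
Qed.

Lemma drho_df y : 0 < y < B -> drho y = df y.
Proof.
  intros Hy. set (d := Rmin y (B - y)). assert (Hd : d > 0) by (unfold d; apply Rmin_pos; lra).
  assert (Hin : forall z, Rabs (z - y) < d -> 0 <= z <= B).
  { intros z Hz. apply Rabs_def2 in Hz. assert (d <= y) by apply Rmin_l. assert (d <= B - y) by apply Rmin_r. lra. }
  apply (uniqueness_limite rho y).
  - apply rho_der; lra.
  - apply (dloc f rho y (df y) d Hd). intros z Hz. symmetry. apply Hrf. auto.
    apply (dpt_of_dw _ _ _ _ d Hd Hin). apply Hdf. lra.
Qed.

Lemma drho_dg y : B < y -> drho y = dg y.
Proof.
  intros Hy. set (d := y - B). assert (Hd : d > 0) by (unfold d; lra).
  apply (uniqueness_limite rho y).
  - apply rho_der; lra.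
  - apply (dloc g rho y (dg y) d Hd). intros z Hz. apply Rabs_def2 in Hz. unfold d in Hz. symmetry. apply Hrg. lra.
    apply (dpt_of_dw (fun z => M0 <= z) _ _ _ d Hd). intros z Hz. apply Rabs_def2 in Hz. unfold d in Hz. lra.
    apply Hdg. lra.
Qed.

Lemma drho_d2f y : 0 < y < B -> y <> A -> derivable_pt_lim drho y (ddf y).
Proof.
  intros Hy HyA. set (d := Rmin (Rmin y (B - y)) (Rabs (y - A))).
  assert (Hd : d > 0) by (unfold d; repeat apply Rmin_pos; try lra; apply Rabs_pos_lt; lra).
  assert (Hin : forall z, Rabs (z - y) < d -> 0 < z < B /\ z <> A).
  { intros z Hz. assert (d <= Rmin y (B - y)) by apply Rmin_l. assert (Rmin y (B - y) <= y) by apply Rmin_l.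
    assert (Rmin y (B - y) <= B - y) by apply Rmin_r. assert (d <= Rabs (y - A)) by apply Rmin_r.
    split. apply Rabs_def2 in Hz. lra. intros ->. rewrite Rabs_minus_sym in Hz. lra. }
  apply (dloc df drho y (ddf y) d Hd). intros z Hz. symmetry. apply drho_df. apply Hin; auto.
  apply (dpt_of_dw (fun z => 0 <= z <= B /\ z <> A) _ _ _ d Hd). intros z Hz. destruct (Hin z Hz); split; [lra|auto].
  apply Hddf. lra. auto.
Qed.

Lemma drho_d2g y : B < y -> derivable_pt_lim drho y (ddg y).
Proof.
  intros Hy. set (d := y - B). assert (Hd : d > 0) by (unfold d; lra).
  apply (dloc dg drho y (ddg y) d Hd). intros z Hz. apply Rabs_def2 in Hz. unfold d in Hz. symmetry. apply drho_dg. lra.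
  apply (dpt_of_dw (fun z => M0 <= z) _ _ _ d Hd). intros z Hz. apply Rabs_def2 in Hz. unfold d in Hz. lra.
  apply Hddg. lra.
Qed.

Lemma dg_cpt y : M0 < y -> continuity_pt dg y.
Proof.
  intros Hy. eapply cpt_of_d. apply (dpt_of_dw (fun z => M0 <= z) _ _ _ (y - M0)). lra.
  intros z Hz. apply Rabs_def2 in Hz. lra. apply Hddg. lra.
Qed.
Lemma dg_cw y : M0 <= y -> cont_within (fun z => M0 <= z) dg y.
Proof. intros. apply (cw_of_dw _ _ (ddg y)); auto. Qed.

Lemma eta_M0 : eta M0 = 0.
Proof.
  assert (Hc : continuity_pt eta M0) by (eapply cpt_of_d; apply Heta).
  destruct (Req_dec (eta M0) 0) as [ok|ne]; auto. exfalso.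
  assert (He : Rabs (eta M0) > 0) by (apply Rabs_pos_lt; auto).
  destruct (proj1 (cpt_eps eta M0) Hc _ He) as [d [Hd H1]].
  specialize (H1 (M0 - d/2) ltac:(rewrite Rabs_left; lra)).
  rewrite Heta0 in H1 by lra. rewrite Rminus_0_l, Rabs_Ropp in H1. lra.
Qed.
Lemma eta_loc0 x : x < M0 -> deta x = 0.
Proof.
  intros Hx. apply (uniqueness_limite eta x); auto.
  apply (dloc (fun _ => 0) eta x 0 (M0 - x)). lra. intros z Hz. apply Rabs_def2 in Hz. rewrite Heta0; lra.
  apply dconst.
Qed.
Lemma eta_loc1 x : B < x -> deta x = 0.
Proof.
  intros Hx. apply (uniqueness_limite eta x); auto.
  apply (dloc (fun _ => 1) eta x 0 (x - B)). lra. intros z Hz. apply Rabs_def2 in Hz. rewrite Heta1; lra.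
  apply dconst.
Qed.
Lemma eta_nonneg x : 0 <= eta x.
Proof.
  destruct (Rle_dec M0 x) as [Hx|Hx]; [|rewrite Heta0; lra].
  rewrite <- eta_M0. apply (mono_within eta deta M0 x); auto.
  intros z Hz. apply cw_of_cpt. eapply cpt_of_d; apply Heta.
  intros; apply Rle_ge, Hdeta.
Qed.


Definition P y := RInt rho 0 y.
Lemma P_ex y : 0 <= y -> ex_RInt rho 0 y.
Proof. intros. apply ex_RInt_within; auto. intros x Hx. apply cw_sub with (S1 := fun z => 0 <= z). intros; lra. apply rho_cw; lra. Qed.
Lemma P_der y : 0 < y -> derivable_pt_lim P y (rho y).
Proof. intros. unfold P. apply ftc_within; auto. intros; apply rho_cw; auto. Qed.
Lemma P_cw y : 0 <= y -> cont_within (fun z => 0 <= z) P y.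
Proof. intros. unfold P. apply RInt_cw; auto. intros; apply rho_cw; auto. Qed.
Lemma P_0 : P 0 = 0.
Proof. unfold P. rewrite RInt_point. reflexivity. Qed.
Lemma P_mono x y : 0 <= x <= y -> P x <= P y.
Proof.
  intros Hxy. apply (mono0 P rho); auto.
  intros; apply P_cw; lra. intros; apply P_der; lra. intros; apply Rle_ge, Hrho0; lra.
Qed.
Lemma P_nonneg y : 0 <= y -> 0 <= P y.
Proof. intros. rewrite <- P_0. apply P_mono; lra. Qed.
Lemma P_lin y : 0 <= y -> P y <= K * y.
Proof.
  intros Hy.
  assert (H := mono0 (fun z => K * z - P z) (fun z => K - rho z) 0 y ltac:(lra)).
  assert (K * 0 - P 0 <= K * y - P y); [|rewrite P_0 in H0; lra].
  apply H.
  - intros z Hz. apply cw_plus with (f := fun z => K * z) (g := fun z => - P z).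
    apply cw_of_cpt. apply (cpt_of_d _ _ (0 * z + K * 1)). apply (dmul (fun _ => K) (fun y => y)). apply dconst. apply did.
    intros eps He. destruct (P_cw z ltac:(lra) eps He) as [d [Hd H1]]. exists d; split; auto.
    intros z' Hz' Hd'. specialize (H1 z' Hz' Hd'). replace (- P z' - - P z) with (- (P z' - P z)) by ring.
    rewrite Rabs_Ropp; auto.
  - intros z Hz. apply (dval _ z (0 * z + K * 1 - rho z)).
    apply dminus. apply (dmul (fun _ => K) (fun y => y)). apply dconst. apply did. apply P_der; lra. ring.
  - intros z Hz. destruct (HK z ltac:(lra)) as [H2 _]. apply Rabs_le_between in H2. lra.
Qed.

Lemma Rintf_P y : 0 <= y <= B -> Rint f 0 y = P y.
Proof.
  intros Hy. assert (E : forall x, Rmin 0 y < x < Rmax 0 y -> rho x = f x).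
  { intros x Hx. rewrite Rmin_left in Hx by lra. rewrite Rmax_right in Hx by lra. apply Hrf; lra. }
  rewrite Rint_RInt. unfold P. symmetry. apply RInt_ext; auto.
  apply (ex_RInt_ext rho f); auto. apply P_ex; lra.
Qed.

Lemma P_B_pos : P B > 0.
Proof.
  assert (HfB : rho B > 0) by (rewrite Hrf by lra; apply Hfpos; lra).
  assert (Hc : continuity_pt rho B) by (apply rho_cpt; lra).
  destruct (proj1 (cpt_eps rho B) Hc (rho B / 2) ltac:(lra)) as [d [Hd H1]].
  set (d' := Rmin (d / 2) (B / 2)). assert (Hd' : 0 < d') by (unfold d'; apply Rmin_pos; lra).
  assert (d' <= d / 2) by apply Rmin_l. assert (d' <= B / 2) by apply Rmin_r.
  assert (Hm := mono0 (fun z => P z - rho B / 2 * z) (fun z => rho z - rho B / 2) (B - d') B ltac:(lra)).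
  assert (P (B - d') - rho B / 2 * (B - d') <= P B - rho B / 2 * B).
  { apply Hm.
    - intros z Hz. apply cw_minus.
      apply P_cw; lra. apply (cw_of_d _ _ _ (0 * z + (rho B / 2) * 1)).
      apply (dmul (fun _ => (rho B / 2)) (fun y => y)). apply dconst. apply did.
    - intros z Hz. apply (dval _ z (rho z - (0 * z + rho B / 2 * 1))).
      apply dminus. apply P_der; lra. apply (dmul (fun _ => rho B / 2) (fun y => y)). apply dconst. apply did. ring.
    - intros z Hz. assert (Rabs (rho z - rho B) < rho B / 2) by (apply H1; apply Rabs_def1; lra).
      match goal with Hx : Rabs _ < rho B / 2 |- _ => apply Rabs_def2 in Hx end. lra. }
  pose proof (P_nonneg (B - d') ltac:(lra)). nra.
Qed.

Definition rL := RintInf (fun y => Rabs (rho y)) 0.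
Lemma rL_lim : has_lim_inf P rL /\ rL > 0.
Proof.
  destruct HL1 as [_ [l Hl]].
  assert (HP : has_lim_inf P l).
  { apply has_lim_inf_ext with (F1 := fun b => Rint (fun y => Rabs (rho y)) 0 b) (a := 0); auto.
    intros b Hb. assert (E : forall x, Rmin 0 b < x < Rmax 0 b -> rho x = Rabs (rho x)).
    { intros x Hx. rewrite Rmin_left in Hx by lra. rewrite Rmax_right in Hx by lra. rewrite Rabs_right; auto. apply Rle_ge, Hrho0; lra. }
    rewrite Rint_RInt. unfold P. symmetry. apply RInt_ext; auto.
    apply (ex_RInt_ext rho); auto. apply P_ex; lra. }
  assert (rL = l) as ->. { unfold rL. apply RintInf_eq. auto. }
  split; auto. pose proof (lim_inf_ge P 0 l ltac:(intros; apply P_mono; lra) HP B ltac:(lra)).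
  pose proof P_B_pos. lra.
Qed.

Definition Gb s b := RInt (fun y => rho y * w s y) 0 b.
Lemma rw_cw s y : 0 < s < T -> 0 <= y -> cont_within (fun z => 0 <= z) (fun y => rho y * w s y) y.
Proof. intros. apply cw_mult. apply rho_cw; auto. apply w_cw; auto. Qed.
Lemma Gb_der s y : 0 < s < T -> 0 < y -> derivable_pt_lim (Gb s) y (rho y * w s y).
Proof. intros. unfold Gb. apply (ftc_within (fun y => rho y * w s y)); auto. intros; apply rw_cw; auto. Qed.
Lemma Gb_cw s y : 0 < s < T -> 0 <= y -> cont_within (fun z => 0 <= z) (Gb s) y.
Proof. intros. unfold Gb. apply (RInt_cw (fun y => rho y * w s y)); auto. intros; apply rw_cw; auto. Qed.
Lemma Gb_0 s : Gb s 0 = 0.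
Proof. unfold Gb. rewrite RInt_point. reflexivity. Qed.
Lemma Gb_ex s y : 0 < s < T -> 0 <= y -> ex_RInt (fun y => rho y * w s y) 0 y.
Proof.
  intros. apply ex_RInt_within; auto. intros x Hx. apply cw_sub with (S1 := fun z => 0 <= z).
  intros; lra. apply rw_cw; auto; lra.
Qed.
Lemma Gb_mono s x y : 0 < s < T -> 0 <= x <= y -> Gb s x <= Gb s y.
Proof.
  intros Hs Hxy. apply (mono0 (Gb s) (fun y => rho y * w s y)); auto.
  intros; apply Gb_cw; auto; lra. intros; apply Gb_der; auto; lra.
  intros z Hz. apply Rle_ge, Rmult_le_pos. apply Hrho0; lra. apply w_nonneg; auto; lra.
Qed.
Lemma Gb_bd s y : 0 < s < T -> 0 <= y -> Gb s y <= K * C.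
Proof.
  intros Hs Hy.
  assert (H := mono0 (fun z => - (K * C) * exp (- z) - Gb s z) (fun z => K * C * exp (- z) - rho z * w s z) 0 y ltac:(lra)).
  assert (- (K * C) * exp (- 0) - Gb s 0 <= - (K * C) * exp (- y) - Gb s y).
  { apply H.
    - intros z Hz. apply cw_plus with (f := fun z => - (K * C) * exp (- z)) (g := fun z => - Gb s z).
      apply cw_of_cpt. apply (cpt_of_d _ _ (0 * exp (- z) + - (K * C) * - exp (- z))).
      apply (dmul (fun _ => - (K * C)) (fun y => exp (- y))). apply dconst. apply dexpn.
      intros eps He. destruct (Gb_cw s z Hs ltac:(lra) eps He) as [d [Hd H1]]. exists d; split; auto.
      intros z' Hz' Hd'. specialize (H1 z' Hz' Hd'). replace (- Gb s z' - - Gb s z) with (- (Gb s z' - Gb s z)) by ring.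
      rewrite Rabs_Ropp; auto.
    - intros z Hz. apply (dval (fun z => - (K * C) * exp (- z) - Gb s z) z (0 * exp (- z) + - (K * C) * - exp (- z) - rho z * w s z)).
      apply dminus. apply (dmul (fun _ => - (K * C)) (fun y => exp (- y))). apply dconst. apply dexpn. apply Gb_der; auto; lra. ring.
    - intros z Hz. pose proof (w_bd s z Hs ltac:(lra)). apply Rabs_le_between in H0.
      destruct (HK z ltac:(lra)) as [H2 _]. apply Rabs_le_between in H2. pose proof (Hrho0 z ltac:(lra)).
      pose proof (w_nonneg s z Hs ltac:(lra)). nra. }
  rewrite Gb_0, Ropp_0, exp_0 in H0. pose proof (exp_pos (- y)). pose proof C_ge0. pose proof K_ge0.
  assert (0 <= K * C) by nra. nra.
Qed.

Definition Gf s := RintInf (fun y => rho y * w s y) 0.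
Lemma Gf_lim s : 0 < s < T -> has_lim_inf (Gb s) (Gf s).
Proof.
  intros Hs. destruct (incr_lim (Gb s) 0 (K * C)) as [l [Hl Hle]].
  - intros x y Hxy. apply Gb_mono; auto; lra.
  - intros x Hx. apply Gb_bd; auto.
  - assert (Gf s = l) as ->; auto.
    unfold Gf. apply RintInf_eq. apply has_lim_inf_ext with (F1 := Gb s) (a := 0); auto.
    intros b Hb. unfold Gb. symmetry. apply Rint_RInt. apply Gb_ex; auto.
Qed.


Definition hh s y := 2 * rho y * (w s y * w s y) + 3 * U s * rho y * w s y + U s * y * drho y * w s y
  + drho y * Fs s y * w s y + rho y * (Ls s - Fs s y) - drho y * wy s y.
Definition Xi s y := rho y * wy s y - rho y * (Fs s y + U s * y) * w s y.
Definition mm y := eta y * dg y.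
Definition Om s y := / 2 * (drho y - 2 * mm y) * (Fs s y * Fs s y) + P y * (Ls s - Fs s y) - drho y * w s y.
Definition qq s y := 2 * (1 - beta) * rho y * (w s y * w s y) + (3 + Cf) * U s * rho y * w s y.

Ltac ctac := repeat first [ apply cminus | apply cplus | apply cmul | apply copp | apply cconst | apply cid ].

Lemma Fs_cpt s y : 0 < s < T -> 0 < y -> continuity_pt (Fs s) y.
Proof. intros; eapply cpt_of_d; apply Fs_der; auto. Qed.

Lemma hh_cpt s y : 0 < s < T -> 0 < y -> continuity_pt (hh s) y.
Proof.
  intros Hs Hy. unfold hh. ctac. all: first [apply rho_cpt | apply drho_cpt | apply w_cpt | apply wy_cpt | apply Fs_cpt]; auto.
Qed.
Lemma qq_cpt s y : 0 < s < T -> 0 < y -> continuity_pt (qq s) y.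
Proof.
  intros Hs Hy. unfold qq. ctac. all: first [apply rho_cpt | apply drho_cpt | apply w_cpt | apply wy_cpt | apply Fs_cpt]; auto.
Qed.
Lemma rwt_cpt s y : 0 < s < T -> 0 < y -> continuity_pt (fun y => rho y * wt s y) y.
Proof.
  intros Hs Hy. apply cmul. apply rho_cpt; auto.
  apply (proj2 (cpt_eps _ _)). intros eps He. destruct (Hwtc s y (conj Hs Hy) eps He) as [d [Hd H1]].
  exists (Rmin d y). split. apply Rmin_pos; lra. intros z Hz. apply H1.
  split; auto. apply Rabs_def2 in Hz. assert (Rmin d y <= y) by apply Rmin_r. lra.
  rewrite Rminus_diag, Rabs_R0; lra. eapply Rlt_le_trans; [exact Hz|apply Rmin_l].
Qed.

Lemma ftc_pos (fn : R -> R) a y : 0 < a -> a < y -> (forall x, 0 < x -> continuity_pt fn x) ->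
  derivable_pt_lim (fun z => RInt fn a z) y (fn y).
Proof. intros. apply ftc_within; auto. intros x Hx. apply cw_of_cpt. apply H1. lra. Qed.
Lemma RInt_cw_pos (fn : R -> R) a x : 0 < a -> a <= x -> (forall x, 0 < x -> continuity_pt fn x) ->
  cont_within (fun z => a <= z) (fun z => RInt fn a z) x.
Proof. intros. apply RInt_cw; auto. intros y Hy. apply cw_of_cpt. apply H1. lra. Qed.
Lemma ex_RInt_pos (fn : R -> R) a b : 0 < a -> a <= b -> (forall x, 0 < x -> continuity_pt fn x) -> ex_RInt fn a b.
Proof. intros. apply ex_RInt_cpt; auto. intros; apply H1; lra. Qed.

Lemma Xi_der s y : 0 < s < T -> 0 < y -> derivable_pt_lim (Xi s) y
  (drho y * wy s y + rho y * wyy s y - ((drho y * (Fs s y + U s * y) + rho y * (w s y + U s * 1)) * w s y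
     + rho y * (Fs s y + U s * y) * wy s y)).
Proof.
  intros Hs Hy. unfold Xi.
  apply (dval _ _ ((drho y * wy s y + rho y * wyy s y) - ((drho y * (Fs s y + U s * y) + rho y * (w s y + (0 * y + U s * 1))) * w s y
     + rho y * (Fs s y + U s * y) * wy s y))); [|ring].
  apply (dminus (fun y => rho y * wy s y) (fun y => rho y * (Fs s y + U s * y) * w s y)).
  apply (dmul rho (wy s)). apply rho_der; auto. apply Hwyy; auto.
  apply (dmul (fun y => rho y * (Fs s y + U s * y)) (w s)). apply (dmul rho (fun y => Fs s y + U s * y)). apply rho_der; auto.
  apply (dplus (Fs s) (fun y => U s * y)). apply Fs_der; auto. apply (dmul (fun _ => U s) (fun y => y)). apply dconst. apply did.
  apply Hwy; auto.
Qed.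

Lemma identity s a c : 0 < s < T -> 0 < a <= c ->
  RInt (fun y => rho y * wt s y) a c = RInt (hh s) a c + Xi s c - Xi s a.
Proof.
  intros Hs Hac.
  set (Lm := fun y => RInt (fun y => rho y * wt s y) a y - RInt (hh s) a y - Xi s y).
  assert (Hd : forall y, a < y < c -> derivable_pt_lim Lm y 0).
  { intros y Hy. unfold Lm. eapply dval. apply dminus. apply dminus.
    apply ftc_pos; try lra. intros; apply rwt_cpt; auto.
    apply ftc_pos; try lra. intros; apply hh_cpt; auto.
    apply Xi_der; auto; lra.
    assert (Hp := Hpde s y Hs ltac:(lra)). rewrite Is_eq, Rs_eq in Hp by (auto; lra).
    unfold hh. replace (wt s y) with ((w s y) ^ 2 - (Fs s y + U s * y) * wy s y + 2 * U s * w s y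
       + (Ls s - Fs s y) + wyy s y) by lra. ring. }
  assert (Hc : forall y, a <= y <= c -> cont_within (fun z => a <= z <= c) Lm y).
  { intros y Hy. unfold Lm. apply cw_minus. apply cw_minus.
    apply cw_sub with (S1 := fun z => a <= z). intros; lra. apply RInt_cw_pos; try lra. intros; apply rwt_cpt; auto.
    apply cw_sub with (S1 := fun z => a <= z). intros; lra. apply RInt_cw_pos; try lra. intros; apply hh_cpt; auto.
    eapply cw_of_d. apply Xi_der; auto; lra. }
  assert (H1 : Lm a <= Lm c).
  { apply (mono_within Lm (fun _ => 0)); [lra|exact Hc|exact Hd|intros; lra]. }
  assert (H2 : 0 - Lm a <= 0 - Lm c).
  { apply (mono_within (fun y => 0 - Lm y) (fun _ => 0)); [lra| | |intros; lra].
    intros y Hy. apply (cw_minus _ (fun _ => 0) Lm). apply cw_const. auto.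
    intros y Hy. apply (dval _ _ (0 - 0)). apply (dminus (fun _ => 0) Lm). apply dconst. auto. ring. }
  unfold Lm in H1, H2. rewrite !RInt_point in H1, H2. unfold zero in H1, H2; simpl in H1, H2. lra.
Qed.


Lemma mm_der_lo y : y < M0 -> derivable_pt_lim mm y 0.
Proof.
  intros Hy. apply (dloc (fun _ => 0) mm y 0 (M0 - y)). lra.
  intros z Hz. apply Rabs_def2 in Hz. unfold mm. rewrite Heta0 by lra. ring. apply dconst.
Qed.
Lemma dg_der y : M0 < y -> derivable_pt_lim dg y (ddg y).
Proof.
  intros Hy. apply (dpt_of_dw (fun z => M0 <= z) _ _ _ (y - M0)). lra.
  intros z Hz. apply Rabs_def2 in Hz. lra. apply Hddg. lra.
Qed.
Lemma mm_der_hi y : M0 < y -> derivable_pt_lim mm y (deta y * dg y + eta y * ddg y).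
Proof. intros Hy. unfold mm. apply (dmul eta dg). apply Heta. apply dg_der; auto. Qed.
Lemma mm_cpt y : y <> M0 -> continuity_pt mm y.
Proof.
  intros Hy. destruct (Rlt_dec y M0). eapply cpt_of_d; apply mm_der_lo; auto.
  eapply cpt_of_d; apply mm_der_hi; lra.
Qed.
Lemma eta_cpt y : continuity_pt eta y.
Proof. eapply cpt_of_d; apply Heta. Qed.
Lemma mm_cw_lo : cont_within (fun z => z <= M0) mm M0.
Proof.
  intros eps He. exists 1. split; [lra|]. intros z Hz _. unfold mm. rewrite eta_M0.
  destruct (Req_dec z M0) as [->|ne]. rewrite eta_M0. rewrite Rminus_diag, Rabs_R0; lra.
  rewrite Heta0 by lra. rewrite Rmult_0_l, Rmult_0_l, Rminus_diag, Rabs_R0; lra.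
Qed.
Lemma mm_cw_hi : cont_within (fun z => M0 <= z) mm M0.
Proof. unfold mm. apply cw_mult. apply cw_of_cpt, eta_cpt. apply dg_cw; lra. Qed.

Lemma Om_der s y d2 dm : 0 < s < T -> 0 < y -> derivable_pt_lim drho y d2 -> derivable_pt_lim mm y dm ->
  derivable_pt_lim (Om s) y
   (/ 2 * (d2 - 2 * dm) * (Fs s y * Fs s y) + / 2 * (drho y - 2 * mm y) * (w s y * Fs s y + Fs s y * w s y)
    + (rho y * (Ls s - Fs s y) + P y * (0 - w s y)) - (d2 * w s y + drho y * wy s y)).
Proof.
  intros Hs Hy H2 Hm. unfold Om.
  apply (dval _ _ ((0 * (drho y - 2 * mm y) + / 2 * (d2 - (0 * mm y + 2 * dm))) * (Fs s y * Fs s y)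
     + / 2 * (drho y - 2 * mm y) * (w s y * Fs s y + Fs s y * w s y)
    + (rho y * (Ls s - Fs s y) + P y * (0 - w s y)) - (d2 * w s y + drho y * wy s y))); [|ring].
  apply (dminus (fun y => / 2 * (drho y - 2 * mm y) * (Fs s y * Fs s y) + P y * (Ls s - Fs s y)) (fun y => drho y * w s y)).
  apply (dplus (fun y => / 2 * (drho y - 2 * mm y) * (Fs s y * Fs s y)) (fun y => P y * (Ls s - Fs s y))).
  apply (dmul (fun y => / 2 * (drho y - 2 * mm y)) (fun y => Fs s y * Fs s y)).
  apply (dmul (fun _ => / 2) (fun y => drho y - 2 * mm y)). apply dconst.
  apply (dminus drho (fun y => 2 * mm y)). auto. apply (dmul (fun _ => 2) mm). apply dconst. auto.
  apply (dmul (Fs s) (Fs s)); apply Fs_der; auto.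
  apply (dmul P (fun y => Ls s - Fs s y)). apply P_der; auto.
  apply (dminus (fun _ => Ls s) (Fs s)). apply dconst. apply Fs_der; auto.
  apply (dmul drho (w s)). auto. apply Hwy; auto.
Qed.

Lemma alg_id s y d2 dm : 
  hh s y - qq s y - (/ 2 * (d2 - 2 * dm) * (Fs s y * Fs s y) + / 2 * (drho y - 2 * mm y) * (w s y * Fs s y + Fs s y * w s y)
    + (rho y * (Ls s - Fs s y) + P y * (0 - w s y)) - (d2 * w s y + drho y * wy s y))
  = 2 * beta * rho y * (w s y * w s y) + U s * (y * drho y - Cf * rho y) * w s y
    + / 2 * (2 * dm - d2) * (Fs s y * Fs s y) + 2 * mm y * Fs s y * w s y + (P y + d2) * w s y.
Proof. unfold hh, qq. field. Qed.

Lemma quad (beta0 a b c e W F : R) : b > 0 -> 0 <= e -> e * c ^ 2 <= beta0 * a * b ->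
  0 <= 2 * beta0 * a * (W * W) + / 2 * e * b * (F * F) + 2 * e * c * F * W.
Proof.
  intros Hb He Hc.
  assert (b * (2 * beta0 * a * (W * W) + / 2 * e * b * (F * F) + 2 * e * c * F * W) >= 0).
  { assert (E : b * (2 * beta0 * a * (W * W) + / 2 * e * b * (F * F) + 2 * e * c * F * W)
       = 2 * (beta0 * a * b - e * c ^ 2) * (W * W) + / 2 * e * ((b * F + 2 * c * W) * (b * F + 2 * c * W))) by field.
    rewrite E. pose proof (Rle_0_sqr (b * F + 2 * c * W)). pose proof (Rle_0_sqr W). unfold Rsqr in *.
    assert (0 <= beta0 * a * b - e * c ^ 2) by lra.
    assert (0 <= 2 * (beta0 * a * b - e * c ^ 2) * (W * W)) by (apply Rmult_le_pos; lra).
    assert (0 <= / 2 * e * ((b * F + 2 * c * W) * (b * F + 2 * c * W))) by (apply Rmult_le_pos; [apply Rmult_le_pos; lra|lra]).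
    lra. }
  set (Q := 2 * beta0 * a * (W * W) + / 2 * e * b * (F * F) + 2 * e * c * F * W) in *.
  destruct (Rle_dec 0 Q); auto. exfalso. assert (b * Q < 0) by (apply Rmult_pos_neg; lra). lra.
Qed.

Lemma key1 s y : 0 < s < T -> 0 < y < M0 -> y <> A ->
  0 <= 2 * beta * rho y * (w s y * w s y) + U s * (y * drho y - Cf * rho y) * w s y
    + / 2 * (2 * 0 - ddf y) * (Fs s y * Fs s y) + 2 * mm y * Fs s y * w s y + (P y + ddf y) * w s y.
Proof.
  intros Hs Hy HyA.
  assert (Hm : mm y = 0) by (unfold mm; rewrite Heta0 by lra; ring). rewrite Hm.
  rewrite drho_df by lra. rewrite Hrf by lra.
  assert (H1 : y * df y <= Cf * f y) by (apply HF2; lra).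
  assert (H2 : ddf y <= 0) by (apply HF4; auto; lra).
  assert (H3 : P y + ddf y >= 0) by (rewrite <- Rintf_P by lra; apply HF3; auto; lra).
  assert (H4 : 0 <= w s y) by (apply w_nonneg; auto; lra).
  assert (H5 : 0 < f y) by (apply Hfpos; lra).
  assert (H6 : U s <= 0) by (apply U_le0; auto).
  assert (0 <= U s * (y * df y - Cf * f y) * w s y) by (apply Rmult_le_pos; [nra|auto]).
  assert (0 <= 2 * beta * f y * (w s y * w s y)).
  { pose proof (Rle_0_sqr (w s y)); unfold Rsqr in *. apply Rmult_le_pos; auto. apply Rmult_le_pos; lra. }
  assert (0 <= / 2 * (2 * 0 - ddf y) * (Fs s y * Fs s y)).
  { pose proof (Rle_0_sqr (Fs s y)); unfold Rsqr in *. apply Rmult_le_pos; auto. apply Rmult_le_pos; lra. }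
  assert (0 <= (P y + ddf y) * w s y) by nra.
  nra.
Qed.

Lemma key2 s y : 0 < s < T -> M0 < y < B ->
  0 <= 2 * beta * rho y * (w s y * w s y) + U s * (y * drho y - Cf * rho y) * w s y
    + / 2 * (2 * (deta y * dg y + eta y * ddg y) - ddf y) * (Fs s y * Fs s y) + 2 * mm y * Fs s y * w s y + (P y + ddf y) * w s y.
Proof.
  intros Hs Hy. unfold mm.
  rewrite drho_df by lra. rewrite Hrf by lra.
  assert (HyA : y <> A) by lra.
  assert (H1 : y * df y <= Cf * f y) by (apply HF2; lra).
  assert (H3 : P y + ddf y >= 0) by (rewrite <- Rintf_P by lra; apply HF3; auto; lra).
  assert (H4 : 0 <= w s y) by (apply w_nonneg; auto; lra).
  assert (H5 : 0 < f y) by (apply Hfpos; lra).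
  assert (H6 : U s <= 0) by (apply U_le0; auto).
  destruct (HFG2 y ltac:(lra)) as [Ha Hb].
  destruct (HG2 y ltac:(lra)) as [Hdg0 Hddg0].
  pose proof (eta_nonneg y) as He.
  assert (Hq : eta y * dg y ^ 2 <= beta * f y * ddg y).
  { assert (Hp : f y * ddg y > 0) by nra.
    unfold Rdiv in Ha. apply (Rmult_le_compat_r (f y * ddg y)) in Ha; [|lra].
    rewrite Rmult_assoc, Rinv_l in Ha by lra. lra. }
  pose proof (quad beta (f y) (ddg y) (dg y) (eta y) (w s y) (Fs s y) Hddg0 He Hq).
  assert (0 <= U s * (y * df y - Cf * f y) * w s y) by (apply Rmult_le_pos; [nra|auto]).
  assert (0 <= / 2 * (2 * deta y * dg y + eta y * ddg y - ddf y) * (Fs s y * Fs s y)).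
  { pose proof (Rle_0_sqr (Fs s y)); unfold Rsqr in *. apply Rmult_le_pos; auto. apply Rmult_le_pos; lra. }
  assert (0 <= (P y + ddf y) * w s y) by nra.
  nra.
Qed.

Lemma key3 s y : 0 < s < T -> B < y ->
  0 <= 2 * beta * rho y * (w s y * w s y) + U s * (y * drho y - Cf * rho y) * w s y
    + / 2 * (2 * (deta y * dg y + eta y * ddg y) - ddg y) * (Fs s y * Fs s y) + 2 * mm y * Fs s y * w s y + (P y + ddg y) * w s y.
Proof.
  intros Hs Hy. unfold mm.
  rewrite drho_dg by lra. rewrite Hrg by lra. rewrite eta_loc1, Heta1 by lra.
  assert (H4 : 0 <= w s y) by (apply w_nonneg; auto; lra).
  assert (H5 : 0 < g y) by (apply Hgpos; lra).
  assert (H6 : U s <= 0) by (apply U_le0; auto).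
  destruct (HG2 y ltac:(lra)) as [Hdg0 Hddg0].
  assert (Hq : 1 * dg y ^ 2 <= beta * g y * ddg y).
  { assert (Hp : g y * ddg y > 0) by nra. pose proof (HG3 y ltac:(lra)) as Ha.
    unfold Rdiv in Ha. apply (Rmult_le_compat_r (g y * ddg y)) in Ha; [|lra].
    rewrite Rmult_assoc, Rinv_l in Ha by lra. lra. }
  pose proof (quad beta (g y) (ddg y) (dg y) 1 (w s y) (Fs s y) Hddg0 ltac:(lra) Hq).
  assert (H7 : y * dg y - Cf * g y <= 0).
  { assert (y * dg y <= 0) by (assert (0 < y) by lra; nra). assert (0 < Cf * g y) by (apply Rmult_lt_0_compat; lra). lra. }
  assert (0 <= U s * (y * dg y - Cf * g y) * w s y) by (apply Rmult_le_pos; [nra|auto]).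
  assert (0 <= P y) by (apply P_nonneg; lra).
  assert (0 <= (P y + ddg y) * w s y) by nra.
  nra.
Qed.


Definition OmD s y d2 dm := / 2 * (d2 - 2 * dm) * (Fs s y * Fs s y) + / 2 * (drho y - 2 * mm y) * (w s y * Fs s y + Fs s y * w s y)
    + (rho y * (Ls s - Fs s y) + P y * (0 - w s y)) - (d2 * w s y + drho y * wy s y).

Ltac cwtac := repeat first [ apply cw_minus | apply cw_plus | apply cw_mult | apply cw_const ].

Lemma Om_cw s (S : R -> Prop) y : 0 < s < T -> 0 < y -> cont_within S mm y -> cont_within S (Om s) y.
Proof.
  intros Hs Hy Hm. unfold Om.
  assert (HF : cont_within S (Fs s) y) by (apply cw_of_cpt, Fs_cpt; auto).
  assert (HD : cont_within S drho y) by (apply cw_of_cpt, drho_cpt; auto).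
  apply cw_minus. apply cw_plus. apply cw_mult. apply cw_mult. apply cw_const.
  apply cw_minus. auto. apply cw_mult. apply cw_const. exact Hm.
  apply cw_mult; auto. apply cw_mult. apply cw_of_cpt. eapply cpt_of_d; apply P_der; auto.
  apply cw_minus. apply cw_const. auto. apply cw_mult. auto. apply cw_of_cpt, w_cpt; auto.
Qed.

Lemma Lam_cw s e a c y : 0 < s < T -> 0 < e <= a -> a <= y <= c -> cont_within (fun z => a <= z <= c) mm y ->
  cont_within (fun z => a <= z <= c) (fun y => RInt (hh s) e y - RInt (qq s) e y - Om s y) y.
Proof.
  intros Hs He Hy Hm. apply cw_minus. apply cw_minus.
  apply cw_sub with (S1 := fun z => e <= z). intros; lra. apply RInt_cw_pos; try lra. intros; apply hh_cpt; auto.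
  apply cw_sub with (S1 := fun z => e <= z). intros; lra. apply RInt_cw_pos; try lra. intros; apply qq_cpt; auto.
  apply Om_cw; auto; lra.
Qed.

Lemma Lam_der s e y d2 dm : 0 < s < T -> 0 < e < y -> derivable_pt_lim drho y d2 -> derivable_pt_lim mm y dm ->
  derivable_pt_lim (fun y => RInt (hh s) e y - RInt (qq s) e y - Om s y) y (hh s y - qq s y - OmD s y d2 dm).
Proof.
  intros Hs Hy H2 Hm. apply (dminus (fun y => RInt (hh s) e y - RInt (qq s) e y) (Om s)).
  apply (dminus (fun y => RInt (hh s) e y) (fun y => RInt (qq s) e y)).
  apply ftc_pos; try lra. intros; apply hh_cpt; auto.
  apply ftc_pos; try lra. intros; apply qq_cpt; auto.
  unfold OmD. apply Om_der; auto; lra.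
Qed.

Lemma ineq s e b : 0 < s < T -> 0 < e < A -> B < b ->
  RInt (hh s) e b - RInt (qq s) e b >= Om s b - Om s e.
Proof.
  intros Hs He Hb.
  set (Lm := fun y => RInt (hh s) e y - RInt (qq s) e y - Om s y).
  assert (Hmc : forall y, y <> M0 -> 0 < y -> forall S, cont_within S mm y).
  { intros y Hy Hy0 S. apply cw_of_cpt. apply mm_cpt; auto. }
  assert (P1 : Lm e <= Lm A).
  { apply (mono_within Lm (fun y => hh s y - qq s y - OmD s y (ddf y) 0)); [lra| | |].
    - intros y Hy. apply Lam_cw; auto; try lra. apply Hmc; lra.
    - intros y Hy. apply Lam_der; auto; try lra. apply drho_d2f; lra. apply mm_der_lo; lra.
    - intros y Hy. unfold OmD. rewrite alg_id. apply Rle_ge. apply key1; auto; lra. }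
  assert (P2 : Lm A <= Lm M0).
  { apply (mono_within Lm (fun y => hh s y - qq s y - OmD s y (ddf y) 0)); [lra| | |].
    - intros y Hy. apply Lam_cw; auto; try lra. destruct (Req_dec y M0) as [->|ne].
      apply cw_sub with (S1 := fun z => z <= M0). intros; lra. apply mm_cw_lo. apply Hmc; lra.
    - intros y Hy. apply Lam_der; auto; try lra. apply drho_d2f; lra. apply mm_der_lo; lra.
    - intros y Hy. unfold OmD. rewrite alg_id. apply Rle_ge. apply key1; auto; lra. }
  assert (P3 : Lm M0 <= Lm B).
  { apply (mono_within Lm (fun y => hh s y - qq s y - OmD s y (ddf y) (deta y * dg y + eta y * ddg y))); [lra| | |].
    - intros y Hy. apply Lam_cw; auto; try lra. destruct (Req_dec y M0) as [->|ne].
      apply cw_sub with (S1 := fun z => M0 <= z). intros; lra. apply mm_cw_hi. apply Hmc; lra.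
    - intros y Hy. apply Lam_der; auto; try lra. apply drho_d2f; lra. apply mm_der_hi; lra.
    - intros y Hy. unfold OmD. rewrite alg_id. apply Rle_ge. apply key2; auto; lra. }
  assert (P4 : Lm B <= Lm b).
  { apply (mono_within Lm (fun y => hh s y - qq s y - OmD s y (ddg y) (deta y * dg y + eta y * ddg y))); [lra| | |].
    - intros y Hy. apply Lam_cw; auto; try lra. apply Hmc; lra.
    - intros y Hy. apply Lam_der; auto; try lra. apply drho_d2g; lra. apply mm_der_hi; lra.
    - intros y Hy. unfold OmD. rewrite alg_id. apply Rle_ge. apply key3; auto; lra. }
  unfold Lm in *. rewrite !RInt_point in P1. unfold zero in P1; simpl in P1. lra.
Qed.


Lemma fn_der s e b : 0 < s < T -> 0 < e <= b ->
  derivable_pt_lim (fun u => RInt (fun y => rho y * w u y) e b) s (RInt (fun y => rho y * wt s y) e b).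
Proof.
  intros Hs Heb.
  set (r := Rmin s (T - s)). assert (Hr : 0 < r) by (unfold r; apply Rmin_pos; lra).
  assert (Hin : forall u, Rabs (u - s) < r -> 0 < u < T).
  { intros u Hu. apply Rabs_def2 in Hu. assert (r <= s) by apply Rmin_l. assert (r <= T - s) by apply Rmin_r. lra. }
  assert (HD : forall u v, 0 < u < T -> 0 < v -> Derive (fun z => rho v * w z v) u = rho v * wt u v).
  { intros u v Hu Hv. apply is_derive_unique. apply is_derive_Reals.
    apply (dval _ _ (0 * w u v + rho v * wt u v)). apply (dmul (fun _ => rho v) (fun z => w z v)). apply dconst.
    apply Hwt; auto. ring. }
  apply is_derive_Reals.
  replace (RInt (fun y => rho y * wt s y) e b) with (RInt (fun t => Derive (fun u => rho t * w u t) s) e b).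
  2:{ apply RInt_ext. intros x Hx. rewrite Rmin_left in Hx by lra. rewrite Rmax_right in Hx by lra. apply HD; auto; lra. }
  apply (is_derive_RInt_param (fun u y => rho y * w u y) e b s).
  - exists (mkposreal _ Hr). intros u Hu t Ht. unfold ball in Hu; simpl in Hu; unfold AbsRing_ball, abs, minus, plus, opp in Hu; simpl in Hu.
    rewrite Rmin_left in Ht by lra. rewrite Rmax_right in Ht by lra.
    exists (rho t * wt u t). apply is_derive_Reals.
    apply (dval _ _ (0 * w u t + rho t * wt u t)). apply (dmul (fun _ => rho t) (fun z => w z t)). apply dconst.
    apply Hwt; auto; lra. ring.
  - intros t Ht. rewrite Rmin_left in Ht by lra. rewrite Rmax_right in Ht by lra.
    intros eps.
    assert (Hrt : continuity_pt rho t) by (apply rho_cpt; lra).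
    set (M := Rabs (rho t) + Rabs (wt s t) + 1).
    assert (HM : M > 0) by (unfold M; pose proof (Rabs_pos (rho t)); pose proof (Rabs_pos (wt s t)); lra).
    set (e1 := Rmin 1 (eps / (4 * M))).
    assert (He1 : e1 > 0) by (unfold e1; apply Rmin_pos; [lra|apply Rdiv_lt_0_compat; [apply (cond_pos eps)|lra]]).
    destruct (proj1 (cpt_eps rho t) Hrt e1 He1) as [d1 [Hd1 H1]].
    assert (Ht0 : 0 < t) by lra. destruct (Hwtc s t (conj Hs Ht0) e1 He1) as [d2 [Hd2 H2]].
    set (d := Rmin (Rmin d1 d2) (Rmin r (t / 2))).
    assert (Hd : 0 < d) by (unfold d; repeat apply Rmin_pos; lra).
    exists (mkposreal _ Hd). intros u v Hu Hv. simpl in Hu, Hv.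
    assert (d <= Rmin d1 d2) by apply Rmin_l. assert (Rmin d1 d2 <= d1) by apply Rmin_l.
    assert (Rmin d1 d2 <= d2) by apply Rmin_r. assert (d <= Rmin r (t/2)) by apply Rmin_r.
    assert (Rmin r (t/2) <= r) by apply Rmin_l. assert (Rmin r (t/2) <= t / 2) by apply Rmin_r.
    assert (Hu' : 0 < u < T) by (apply Hin; lra).
    assert (Hv' : 0 < v) by (apply Rabs_def2 in Hv; lra).
    rewrite !HD; auto; try lra.
    specialize (H1 v ltac:(lra)). specialize (H2 u v (conj Hu' Hv') ltac:(lra) ltac:(lra)).
    replace (rho v * wt u v - rho t * wt s t) with ((rho v - rho t) * wt u v + rho t * (wt u v - wt s t)) by ring.
    eapply Rle_lt_trans. apply Rabs_triang. rewrite !Rabs_mult.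
    assert (Hgz : Rabs (wt u v) <= Rabs (wt s t) + 1).
    { replace (wt u v) with (wt s t + (wt u v - wt s t)) by ring. eapply Rle_trans. apply Rabs_triang.
      assert (e1 <= 1) by (unfold e1; apply Rmin_l). lra. }
    assert (He2 : e1 <= eps / (4 * M)) by (unfold e1; apply Rmin_r).
    assert (e1 * M <= eps / 4).
    { apply (Rmult_le_compat_r M) in He2; [|lra]. replace (eps / (4 * M) * M) with (eps / 4) in He2 by (field; lra). lra. }
    pose proof (Rabs_pos (rho v - rho t)). pose proof (Rabs_pos (rho t)). pose proof (Rabs_pos (wt u v - wt s t)).
    pose proof (Rabs_pos (wt s t)). pose proof (Rabs_pos (wt u v)). pose proof (cond_pos eps).
    assert (Rabs (rho v - rho t) * Rabs (wt u v) <= e1 * M).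
    { apply Rmult_le_compat; try lra. unfold M; lra. }
    assert (Rabs (rho t) * Rabs (wt u v - wt s t) <= e1 * M).
    { rewrite Rmult_comm. apply Rmult_le_compat; try lra. unfold M; lra. }
    lra.
  - exists (mkposreal _ Hr). intros u Hu. unfold ball in Hu; simpl in Hu; unfold AbsRing_ball, abs, minus, plus, opp in Hu; simpl in Hu.
    apply ex_RInt_pos; try lra. intros x Hx. apply cmul. apply rho_cpt; auto. apply w_cpt; auto.
Qed.


Lemma abs_mul_le a b A0 B0 : Rabs a <= A0 -> Rabs b <= B0 -> Rabs (a * b) <= A0 * B0.
Proof. intros. rewrite Rabs_mult. apply Rmult_le_compat; auto; apply Rabs_pos. Qed.

Lemma exp_bd y : 0 <= y -> (1 + y) * exp (- y) <= 1.
Proof.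
  intros Hy. rewrite exp_Ropp. pose proof (exp_pos y).
  assert (1 + y <= exp y).
  { destruct (Req_dec y 0) as [->|ne]. rewrite exp_0; lra. left; apply exp_ineq1; auto. }
  apply (Rmult_le_reg_r (exp y)); auto. rewrite Rmult_assoc, Rinv_l by lra. lra.
Qed.
Lemma exp_bd2 y : 0 < y -> (2 + y) * exp (- y) <= 4 / y.
Proof.
  intros Hy. rewrite exp_Ropp. pose proof (exp_pos y).
  assert (Hh : 1 + y / 2 <= exp (y / 2)) by (left; apply exp_ineq1; lra).
  assert (E : exp y = exp (y/2) * exp (y/2)) by (rewrite <- exp_plus; f_equal; field).
  assert (Hq : (1 + y/2) * (1 + y/2) <= exp y) by (rewrite E; apply Rmult_le_compat; lra).
  apply (Rmult_le_reg_r (exp y * y)). nra.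
  replace ((2 + y) * / exp y * (exp y * y)) with ((2 + y) * y) by (field; lra).
  replace (4 / y * (exp y * y)) with (4 * exp y) by (field; lra). nra.
Qed.

Lemma abs6 a b c d e f0 : Rabs (a + b + c + d + e - f0) <= Rabs a + Rabs b + Rabs c + Rabs d + Rabs e + Rabs f0.
Proof.
  unfold Rminus. eapply Rle_trans; [apply Rabs_triang|]. rewrite Rabs_Ropp.
  apply Rplus_le_compat_r. eapply Rle_trans; [apply Rabs_triang|]. apply Rplus_le_compat_r.
  eapply Rle_trans; [apply Rabs_triang|]. apply Rplus_le_compat_r.
  eapply Rle_trans; [apply Rabs_triang|]. apply Rplus_le_compat_r. apply Rabs_triang.
Qed.

Definition Mh := 3 * K * C * C + 4 * Unorm * K * C + 2 * K * C.
Definition MX := K * C + K * C * C + Unorm * K * C.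
Definition MXs := K * (C + (C + Unorm * A) * C).

Lemma hh_bd s y : 0 < s < T -> 0 < y -> Rabs (hh s y) <= Mh * ((1 + y) * exp (- y)).
Proof.
  intros Hs Hy.
  pose proof K_ge0. pose proof C_ge0. pose proof Unorm_ge0.
  destruct (HK y ltac:(lra)) as [Hr Hd].
  pose proof (w_bd s y Hs Hy) as Hw. pose proof (wy_bd s y Hs Hy) as Hwy'. pose proof (w_bdC s y Hs Hy) as HwC.
  pose proof (U_bd s Hs) as HU. pose proof (Fs_nonneg s y Hs ltac:(lra)) as HF0.
  destruct (Fs_lim s Hs) as [_ HFL]. pose proof (HFL y ltac:(lra)) as HFL'.
  pose proof (Fs_diff s 0 y Hs ltac:(lra)) as HFd. rewrite Fs_0, Ropp_0, exp_0 in HFd.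
  pose proof (exp_pos (- y)) as Hey.
  assert (HFC : Rabs (Fs s y) <= C) by (rewrite Rabs_right; nra).
  destruct (Rs_bd s y Hs ltac:(lra)) as [HR1 HR2].
  assert (HR : Rabs (Ls s - Fs s y) <= C * exp (- y)) by (rewrite Rabs_right; lra).
  assert (Hyy : Rabs y <= y) by (rewrite Rabs_right; lra).
  set (E := exp (- y)) in *.
  assert (T1 : Rabs (2 * rho y * (w s y * w s y)) <= 2 * (K * (C * (C * E)))).
  { rewrite Rmult_assoc. apply abs_mul_le. rewrite Rabs_right; lra. apply abs_mul_le; auto. apply abs_mul_le; auto. }
  assert (T2 : Rabs (3 * U s * rho y * w s y) <= 3 * Unorm * K * (C * E)).
  { apply abs_mul_le; auto. apply abs_mul_le; auto. apply abs_mul_le; auto. rewrite Rabs_right; lra. }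
  assert (T3 : Rabs (U s * y * drho y * w s y) <= Unorm * y * K * (C * E)).
  { apply abs_mul_le; auto. apply abs_mul_le; auto. apply abs_mul_le; auto. }
  assert (T4 : Rabs (drho y * Fs s y * w s y) <= K * C * (C * E)).
  { apply abs_mul_le; auto. apply abs_mul_le; auto. }
  assert (T5 : Rabs (rho y * (Ls s - Fs s y)) <= K * (C * E)) by (apply abs_mul_le; auto).
  assert (T6 : Rabs (drho y * wy s y) <= K * (C * E)) by (apply abs_mul_le; auto).
  unfold hh. eapply Rle_trans; [apply abs6|].
  unfold Mh.
  assert (0 <= Unorm * K * C * E) by (repeat apply Rmult_le_pos; lra).
  assert (0 <= K * C * C * E) by (repeat apply Rmult_le_pos; lra).
  assert (0 <= K * C * E) by (repeat apply Rmult_le_pos; lra).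
  assert (Unorm * y * K * (C * E) = y * (Unorm * K * C * E)) by ring.
  assert (0 <= y * (Unorm * K * C * E)) by (apply Rmult_le_pos; lra).
  nra.
Qed.

Lemma Xi_bd s y : 0 < s < T -> 0 < y -> Rabs (Xi s y) <= MX * ((1 + y) * exp (- y)).
Proof.
  intros Hs Hy.
  pose proof K_ge0. pose proof C_ge0. pose proof Unorm_ge0.
  destruct (HK y ltac:(lra)) as [Hr Hd].
  pose proof (w_bd s y Hs Hy) as Hw. pose proof (wy_bd s y Hs Hy) as Hwy'.
  pose proof (U_bd s Hs) as HU. pose proof (Fs_nonneg s y Hs ltac:(lra)) as HF0.
  pose proof (Fs_diff s 0 y Hs ltac:(lra)) as HFd. rewrite Fs_0, Ropp_0, exp_0 in HFd.
  pose proof (exp_pos (- y)) as Hey.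
  set (E := exp (- y)) in *.
  assert (HFC : Rabs (Fs s y) <= C) by (rewrite Rabs_right; nra).
  assert (HI : Rabs (Fs s y + U s * y) <= C + Unorm * y).
  { eapply Rle_trans. apply Rabs_triang. rewrite Rabs_mult. rewrite (Rabs_right y) by lra.
    apply Rplus_le_compat; auto. apply Rmult_le_compat_r; lra. }
  assert (T1 : Rabs (rho y * wy s y) <= K * (C * E)) by (apply abs_mul_le; auto).
  assert (T2 : Rabs (rho y * (Fs s y + U s * y) * w s y) <= K * (C + Unorm * y) * (C * E)).
  { apply abs_mul_le; auto. apply abs_mul_le; auto. }
  unfold Xi. unfold Rminus. eapply Rle_trans; [apply Rabs_triang|]. rewrite Rabs_Ropp.
  unfold MX.
  assert (0 <= Unorm * K * C * E) by (repeat apply Rmult_le_pos; lra).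
  assert (0 <= K * C * C * E) by (repeat apply Rmult_le_pos; lra).
  assert (0 <= K * C * E) by (repeat apply Rmult_le_pos; lra).
  assert (K * (C + Unorm * y) * (C * E) = K * C * C * E + y * (Unorm * K * C * E)) by ring.
  assert (0 <= y * (Unorm * K * C * E)) by (apply Rmult_le_pos; lra).
  nra.
Qed.

Lemma Xi_bds s y : 0 < s < T -> 0 < y <= A -> Rabs (Xi s y) <= MXs * y.
Proof.
  intros Hs Hy.
  pose proof K_ge0. pose proof C_ge0. pose proof Unorm_ge0.
  destruct (HK y ltac:(lra)) as [Hr Hd].
  pose proof (w_bdC s y Hs ltac:(lra)) as Hw. pose proof (wy_bdC s y Hs ltac:(lra)) as Hwy'.
  pose proof (U_bd s Hs) as HU. pose proof (Fs_nonneg s y Hs ltac:(lra)) as HF0.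
  pose proof (Fs_diff s 0 y Hs ltac:(lra)) as HFd. rewrite Fs_0, Ropp_0, exp_0 in HFd.
  pose proof (exp_pos (- y)) as Hey.
  assert (HFC : Rabs (Fs s y) <= C) by (rewrite Rabs_right; nra).
  assert (HI : Rabs (Fs s y + U s * y) <= C + Unorm * A).
  { eapply Rle_trans. apply Rabs_triang. rewrite Rabs_mult. rewrite (Rabs_right y) by lra.
    apply Rplus_le_compat; auto. apply Rmult_le_compat; try lra. apply Rabs_pos. }
  assert (Hry : Rabs (rho y) <= K * y) by (rewrite Rabs_right; [apply rho_lin; lra|apply Rle_ge, Hrho0; lra]).
  assert (T1 : Rabs (rho y * wy s y) <= K * y * C) by (apply abs_mul_le; auto).
  assert (T2 : Rabs (rho y * (Fs s y + U s * y) * w s y) <= K * y * (C + Unorm * A) * C).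
  { apply abs_mul_le; auto. apply abs_mul_le; auto. }
  unfold Xi. unfold Rminus. eapply Rle_trans; [apply Rabs_triang|]. rewrite Rabs_Ropp.
  unfold MXs. nra.
Qed.


Lemma Phi_der M y : derivable_pt_lim (fun y => - M * ((2 + y) * exp (- y))) y (M * ((1 + y) * exp (- y))).
Proof.
  apply (dval _ _ (0 * ((2 + y) * exp (- y)) + - M * ((0 + 1) * exp (- y) + (2 + y) * - exp (- y)))); [|ring].
  apply (dmul (fun _ => - M) (fun y => (2 + y) * exp (- y))). apply dconst.
  apply (dmul (fun y => 2 + y) (fun y => exp (- y))). apply (dplus (fun _ => 2) (fun y => y)). apply dconst. apply did.
  apply dexpn.
Qed.

Lemma decr2 a c : 0 <= a <= c -> (2 + c) * exp (- c) <= (2 + a) * exp (- a).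
Proof.
  intros Hac. assert (H := mono_within (fun y => - 1 * ((2 + y) * exp (- y))) (fun y => 1 * ((1 + y) * exp (- y))) a c ltac:(lra)).
  assert (- 1 * ((2 + a) * exp (- a)) <= - 1 * ((2 + c) * exp (- c))); [|lra].
  apply H. intros; eapply cw_of_d; apply Phi_der. intros; apply Phi_der.
  intros y Hy. pose proof (exp_pos (- y)). apply Rle_ge. apply Rmult_le_pos; [lra|]. apply Rmult_le_pos; lra.
Qed.

Lemma RInt_tail (phi : R -> R) M a c : 0 <= M -> 0 < a <= c -> (forall y, 0 < y -> continuity_pt phi y) ->
  (forall y, 0 < y -> Rabs (phi y) <= M * ((1 + y) * exp (- y))) ->
  Rabs (RInt phi a c) <= M * ((2 + a) * exp (- a)).
Proof.
  intros HM Hac Hc Hb.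
  assert (Hcw : forall y, a <= y <= c -> cont_within (fun z => a <= z <= c) (fun y => RInt phi a y) y).
  { intros y Hy. apply cw_sub with (S1 := fun z => a <= z). intros; lra. apply RInt_cw_pos; auto; lra. }
  assert (H1 : - M * ((2 + a) * exp (- a)) - RInt phi a a <= - M * ((2 + c) * exp (- c)) - RInt phi a c).
  { apply (mono_within (fun y => - M * ((2 + y) * exp (- y)) - RInt phi a y) (fun y => M * ((1 + y) * exp (- y)) - phi y)); [lra| | |].
    - intros y Hy. apply cw_minus. eapply cw_of_d; apply Phi_der. auto.
    - intros y Hy. apply dminus. apply Phi_der. apply ftc_pos; auto; lra.
    - intros y Hy. specialize (Hb y ltac:(lra)). apply Rabs_le_between in Hb. lra. }
  assert (H2 : - M * ((2 + a) * exp (- a)) + RInt phi a a <= - M * ((2 + c) * exp (- c)) + RInt phi a c).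
  { apply (mono_within (fun y => - M * ((2 + y) * exp (- y)) + RInt phi a y) (fun y => M * ((1 + y) * exp (- y)) + phi y)); [lra| | |].
    - intros y Hy. apply cw_plus. eapply cw_of_d; apply Phi_der. auto.
    - intros y Hy. apply dplus. apply Phi_der. apply ftc_pos; auto; lra.
    - intros y Hy. specialize (Hb y ltac:(lra)). apply Rabs_le_between in Hb. lra. }
  rewrite RInt_point in H1, H2. unfold zero in H1, H2; simpl in H1, H2.
  pose proof (exp_pos (- c)). assert (0 <= M * ((2 + c) * exp (- c))) by (apply Rmult_le_pos; [lra|]; apply Rmult_le_pos; lra).
  apply Rabs_le. lra.
Qed.

Lemma Mh_ge0 : 0 <= Mh.
Proof. unfold Mh. pose proof K_ge0. pose proof C_ge0. pose proof Unorm_ge0. assert (0 <= K * C) by nra. nra. Qed.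
Lemma MX_ge0 : 0 <= MX.
Proof. unfold MX. pose proof K_ge0. pose proof C_ge0. pose proof Unorm_ge0. assert (0 <= K * C) by nra. nra. Qed.
Lemma MXs_ge0 : 0 <= MXs.
Proof. unfold MXs. pose proof K_ge0. pose proof C_ge0. pose proof Unorm_ge0. assert (0 <= Unorm * A) by (apply Rmult_le_pos; lra).
  apply Rmult_le_pos; auto. assert (0 <= (C + Unorm * A) * C) by (apply Rmult_le_pos; lra). lra. Qed.

Lemma rwt_ex s a c : 0 < s < T -> 0 < a <= c -> ex_RInt (fun y => rho y * wt s y) a c.
Proof. intros. apply ex_RInt_pos; auto; try lra. intros; apply rwt_cpt; auto. Qed.

Lemma Dbig s a c : 0 < s < T -> 1 <= a <= c ->
  Rabs (RInt (fun y => rho y * wt s y) a c) <= (Mh + 2 * MX) * ((2 + a) * exp (- a)).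
Proof.
  intros Hs Hac. rewrite identity by (auto; lra).
  pose proof (RInt_tail (hh s) Mh a c Mh_ge0 ltac:(lra) (fun y Hy => hh_cpt s y Hs Hy) (fun y Hy => hh_bd s y Hs Hy)).
  pose proof (Xi_bd s c Hs ltac:(lra)). pose proof (Xi_bd s a Hs ltac:(lra)).
  pose proof (decr2 a c ltac:(lra)). pose proof MX_ge0. pose proof (exp_pos (- c)). pose proof (exp_pos (- a)).
  assert (MX * ((1 + c) * exp (- c)) <= MX * ((2 + a) * exp (- a))).
  { apply Rmult_le_compat_l; auto. nra. }
  assert (MX * ((1 + a) * exp (- a)) <= MX * ((2 + a) * exp (- a))).
  { apply Rmult_le_compat_l; auto. nra. }
  unfold Rminus. eapply Rle_trans. apply Rabs_triang. rewrite Rabs_Ropp.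
  eapply Rle_trans. apply Rplus_le_compat_r. apply Rabs_triang. lra.
Qed.

Lemma Dsmall s a c : 0 < s < T -> 0 < a <= c -> c <= A ->
  Rabs (RInt (fun y => rho y * wt s y) a c) <= (Mh + 2 * MXs) * c.
Proof.
  intros Hs Hac HcA. rewrite identity by (auto; lra).
  assert (H1 : Rabs (RInt (hh s) a c) <= Mh * (c - a)).
  { apply RInt_abs_le; try lra. apply ex_RInt_pos; try lra. intros; apply hh_cpt; auto.
    intros y Hy. eapply Rle_trans. apply hh_bd; auto; lra. pose proof Mh_ge0.
    pose proof (exp_bd y ltac:(lra)). rewrite <- (Rmult_1_r Mh) at 2. apply Rmult_le_compat_l; auto. }
  pose proof (Xi_bds s c Hs ltac:(lra)). pose proof (Xi_bds s a Hs ltac:(lra)). pose proof MXs_ge0. pose proof Mh_ge0.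
  unfold Rminus. eapply Rle_trans. apply Rabs_triang. rewrite Rabs_Ropp.
  eapply Rle_trans. apply Rplus_le_compat_r. apply Rabs_triang.
  assert (MXs * a <= MXs * c) by (apply Rmult_le_compat_l; lra).
  assert (Mh * (c - a) <= Mh * c) by (apply Rmult_le_compat_l; lra). lra.
Qed.

Definition en (n : nat) := A / (INR n + 2).
Definition bn (n : nat) := B + 1 + INR n.
Lemma en_pos n : 0 < en n < A.
Proof. unfold en. pose proof (pos_INR n). split. apply Rdiv_lt_0_compat; lra.
  apply (Rmult_lt_reg_r (INR n + 2)); [lra|]. unfold Rdiv. rewrite Rmult_assoc, Rinv_l by lra. nra. Qed.
Lemma en_mono n m : (n <= m)%nat -> en m <= en n.
Proof.
  intros H. apply le_INR in H. unfold en. pose proof (pos_INR n). unfold Rdiv.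
  apply Rmult_le_compat_l; [lra|]. apply Rinv_le_contravar; lra.
Qed.
Lemma bn_mono n m : (n <= m)%nat -> bn n <= bn m.
Proof. intros H. apply le_INR in H. unfold bn. lra. Qed.
Lemma bn_gt n : B + 1 <= bn n.
Proof. unfold bn. pose proof (pos_INR n). lra. Qed.

Definition Dn s n : R := RInt (fun y => rho y * wt s y) (en n) (bn n).

Lemma Dn_diff s n m : 0 < s < T -> (n <= m)%nat ->
  Rabs (Dn s n - Dn s m) <= (Mh + 2 * MXs) * en n + (Mh + 2 * MX) * (4 / bn n).
Proof.
  intros Hs Hnm. unfold Dn.
  pose proof (en_pos n). pose proof (en_pos m). pose proof (en_mono n m Hnm). pose proof (bn_mono n m Hnm).
  pose proof (bn_gt n). pose proof (bn_gt m).
  assert (X1 : 0 < en m <= en n) by lra. assert (X2 : 0 < en n <= bn n) by lra.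
  assert (X3 : 0 < en m <= bn n) by lra. assert (X4 : 0 < bn n <= bn m) by lra.
  assert (E1 := RInt_Chasles (fun y => rho y * wt s y) (en m) (en n) (bn n) (rwt_ex s _ _ Hs X1) (rwt_ex s _ _ Hs X2)).
  assert (E2 := RInt_Chasles (fun y => rho y * wt s y) (en m) (bn n) (bn m) (rwt_ex s _ _ Hs X3) (rwt_ex s _ _ Hs X4)).
  unfold plus in E1, E2; simpl in E1, E2.
  pose proof (Dsmall s (en m) (en n) Hs ltac:(lra) ltac:(lra)).
  pose proof (Dbig s (bn n) (bn m) Hs ltac:(lra)).
  pose proof (exp_bd2 (bn n) ltac:(lra)). pose proof Mh_ge0. pose proof MX_ge0.
  assert ((Mh + 2 * MX) * ((2 + bn n) * exp (- bn n)) <= (Mh + 2 * MX) * (4 / bn n)) by (apply Rmult_le_compat_l; lra).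
  replace (RInt (fun y => rho y * wt s y) (en n) (bn n) - RInt (fun y => rho y * wt s y) (en m) (bn m))
    with (- (RInt (fun y => rho y * wt s y) (en m) (en n)) - RInt (fun y => rho y * wt s y) (bn n) (bn m)) by lra.
  unfold Rminus. eapply Rle_trans. apply Rabs_triang. rewrite !Rabs_Ropp. lra.
Qed.

Lemma Dn_cauchy : forall e, e > 0 -> exists N, forall n m s, (n >= N)%nat -> (m >= N)%nat -> 0 < s < T ->
  Rabs (Dn s n - Dn s m) <= e.
Proof.
  intros e He. set (Q := (Mh + 2 * MXs) * A + 4 * (Mh + 2 * MX)).
  pose proof Mh_ge0. pose proof MX_ge0. pose proof MXs_ge0.
  assert (HQ : 0 <= Q) by (unfold Q; nra).
  destruct (INR_unbounded (Q / e)) as [N HN]. exists N. intros n m s Hn Hm Hs.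
  assert (key : forall n m, (N <= n)%nat -> (n <= m)%nat -> Rabs (Dn s n - Dn s m) <= e).
  { clear n m Hn Hm. intros n m Hn Hnm. eapply Rle_trans. apply Dn_diff; auto.
    apply le_INR in Hn. pose proof (pos_INR N).
    assert (Hen : en n <= A / (INR N + 1)).
    { unfold en. unfold Rdiv. apply Rmult_le_compat_l; [lra|]. apply Rinv_le_contravar; lra. }
    assert (Hbn : 4 / bn n <= 4 / (INR N + 1)).
    { unfold bn, Rdiv. apply Rmult_le_compat_l; [lra|]. apply Rinv_le_contravar; lra. }
    assert (Q / (INR N + 1) <= e).
    { apply (Rmult_le_reg_r (INR N + 1)); [lra|]. unfold Rdiv. rewrite Rmult_assoc, Rinv_l, Rmult_1_r by lra.
      apply (Rmult_lt_compat_r e) in HN; auto. unfold Rdiv in HN. rewrite Rmult_assoc, Rinv_l, Rmult_1_r in HN by lra. nra. }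
    assert ((Mh + 2 * MXs) * en n + (Mh + 2 * MX) * (4 / bn n) <= Q / (INR N + 1)).
    { unfold Q. replace (((Mh + 2 * MXs) * A + 4 * (Mh + 2 * MX)) / (INR N + 1)) with
        ((Mh + 2 * MXs) * (A / (INR N + 1)) + (Mh + 2 * MX) * (4 / (INR N + 1))) by (field; lra).
      apply Rplus_le_compat; apply Rmult_le_compat_l; lra. }
    lra. }
  destruct (Nat.le_gt_cases n m) as [Hle|Hgt]. apply key; auto. rewrite Rabs_minus_sym. apply key; auto. apply Nat.lt_le_incl; auto.
Qed.


Lemma L_ge0 : 0 <= L.
Proof. pose proof (HL 1 0 ltac:(lra) ltac:(lra)). rewrite Rminus_0_r, Rabs_R1 in H. pose proof (Rabs_pos (drho 1 - drho 0)). lra. Qed.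

Lemma Om_b_ge s b : 0 < s < T -> B < b -> 0 <= Om s b.
Proof.
  intros Hs Hb. unfold Om, mm. rewrite Heta1 by lra. rewrite drho_dg by lra.
  destruct (HG2 b ltac:(lra)) as [Hdg0 _].
  pose proof (P_nonneg b ltac:(lra)). destruct (Rs_bd s b Hs ltac:(lra)) as [HR _].
  pose proof (w_nonneg s b Hs ltac:(lra)). pose proof (Rle_0_sqr (Fs s b)). unfold Rsqr in *.
  assert (0 <= / 2 * (dg b - 2 * (1 * dg b)) * (Fs s b * Fs s b)) by (apply Rmult_le_pos; lra).
  assert (0 <= P b * (Ls s - Fs s b)) by (apply Rmult_le_pos; lra).
  assert (0 <= - dg b * w s b) by (apply Rmult_le_pos; lra). lra.
Qed.

Lemma Om_e_le s e : 0 < s < T -> 0 < e < A -> Om s e <= / 2 * K * (C * C) * (e * e) + K * C * e + L * C * e.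
Proof.
  intros Hs He. unfold Om, mm. rewrite Heta0 by lra. rewrite Rmult_0_l, Rmult_0_r, Rminus_0_r.
  pose proof K_ge0. pose proof C_ge0. pose proof L_ge0.
  destruct (HK e ltac:(lra)) as [_ Hd]. apply Rabs_le_between in Hd.
  pose proof (Fs_le_lin s e Hs ltac:(lra)). pose proof (Fs_nonneg s e Hs ltac:(lra)).
  pose proof (P_lin e ltac:(lra)). pose proof (P_nonneg e ltac:(lra)).
  destruct (Rs_bd s e Hs ltac:(lra)) as [HR1 HR2]. pose proof (expn_le1 e ltac:(lra)).
  pose proof (w_nonneg s e Hs ltac:(lra)). pose proof (w_bdC s e Hs ltac:(lra)) as HwC. rewrite Rabs_right in HwC by lra.
  pose proof (HL e 0 ltac:(lra) ltac:(lra)) as HLe. rewrite Rminus_0_r, (Rabs_right e) in HLe by lra.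
  apply Rabs_le_between in HLe. pose proof drho_0.
  assert (F2 : Fs s e * Fs s e <= (C * e) * (C * e)) by (apply Rmult_le_compat; lra).
  assert (T1 : / 2 * drho e * (Fs s e * Fs s e) <= / 2 * K * (C * C) * (e * e)).
  { assert (0 <= Fs s e * Fs s e) by (apply Rmult_le_pos; lra).
    assert (/2 * drho e * (Fs s e * Fs s e) <= / 2 * K * (Fs s e * Fs s e)) by (apply Rmult_le_compat_r; lra).
    assert (/ 2 * K * (Fs s e * Fs s e) <= / 2 * K * ((C * e) * (C * e))) by (apply Rmult_le_compat_l; lra).
    replace (/ 2 * K * (C * C) * (e * e)) with (/ 2 * K * ((C * e) * (C * e))) by ring. lra. }
  assert (HRC : Ls s - Fs s e <= C).
  { assert (C * exp (- e) <= C * 1) by (apply Rmult_le_compat_l; lra). lra. }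
  assert (T2 : P e * (Ls s - Fs s e) <= K * C * e).
  { replace (K * C * e) with ((K * e) * C) by ring. apply Rmult_le_compat; lra. }
  assert (T3 : - (drho e * w s e) <= L * C * e).
  { assert (- drho e <= L * e) by lra. replace (L * C * e) with ((L * e) * C) by ring.
    replace (- (drho e * w s e)) with ((- drho e) * w s e) by ring.
    destruct (Rle_dec 0 (- drho e)). apply Rmult_le_compat; lra.
    assert (0 <= drho e * w s e) by (apply Rmult_le_pos; lra).
    assert (0 <= L * e * C) by (apply Rmult_le_pos; [apply Rmult_le_pos|]; lra). lra. }
  replace (/ 2 * (drho e - 0) * (Fs s e * Fs s e)) with (/ 2 * drho e * (Fs s e * Fs s e)) by ring. lra.
Qed.

Lemma lin2 (f1 f2 : R -> R) c1 c2 a b : ex_RInt f1 a b -> ex_RInt f2 a b ->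
  RInt (fun y => c1 * f1 y + c2 * f2 y) a b = c1 * RInt f1 a b + c2 * RInt f2 a b.
Proof.
  intros H1 H2.
  assert (H1' : ex_RInt (fun y => scal c1 (f1 y)) a b) by (apply (@ex_RInt_scal R_NormedModule); auto).
  assert (H2' : ex_RInt (fun y => scal c2 (f2 y)) a b) by (apply (@ex_RInt_scal R_NormedModule); auto).
  assert (E := @RInt_plus R_CompleteNormedModule _ _ a b H1' H2').
  assert (E1 := @RInt_scal R_CompleteNormedModule f1 a b c1 H1). assert (E2 := @RInt_scal R_CompleteNormedModule f2 a b c2 H2).
  simpl in E, E1, E2.
  unfold plus, scal in *; simpl in *. unfold mult in *; simpl in *. rewrite E1, E2 in E. exact E.
Qed.

Definition Xn s n : R := RInt (fun y => rho y * w s y) (en n) (bn n).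
Definition Pn n : R := RInt rho (en n) (bn n).
Definition errn n := / 2 * K * (C * C) * (en n * en n) + K * C * en n + L * C * en n + MXs * en n + MX * (4 / bn n).


Lemma Dn_ge n : 0 < Pn n -> forall s, 0 < s < T ->
  Dn s n >= 2 * (1 - beta) * (Xn s n * Xn s n) / Pn n - Unorm * (3 + Cf) * Xn s n - errn n.
Proof.
  intros HP s Hs. pose proof (en_pos n) as He. pose proof (bn_gt n) as Hb.
  set (e := en n) in *. set (b := bn n) in *.
  unfold Dn. fold e b. rewrite identity by (auto; lra).
  assert (HI := ineq s e b Hs ltac:(lra) ltac:(lra)).
  pose proof (Om_b_ge s b Hs ltac:(lra)). pose proof (Om_e_le s e Hs ltac:(lra)).
  pose proof (Xi_bd s b Hs ltac:(lra)) as Xb. apply Rabs_le_between in Xb.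
  pose proof (Xi_bds s e Hs ltac:(lra)) as Xe. apply Rabs_le_between in Xe.
  pose proof (exp_bd2 b ltac:(lra)). pose proof MX_ge0. pose proof (exp_pos (- b)).
  assert (MX * ((1 + b) * exp (- b)) <= MX * (4 / b)) by (apply Rmult_le_compat_l; nra).
  set (X := Xn s n) in *. set (Pv := Pn n) in *.
  set (lam := X / Pv).
  assert (Hex : forall fn : R -> R, (forall x, 0 < x -> continuity_pt fn x) -> ex_RInt fn e b).
  { intros fn Hfn. apply ex_RInt_pos; try lra; auto. }
  assert (Hrw : ex_RInt (fun y => rho y * w s y) e b) by (apply Hex; intros; apply cmul; [apply rho_cpt|apply w_cpt]; auto).
  assert (Hr : ex_RInt rho e b) by (apply Hex; intros; apply rho_cpt; auto).
  set (c1 := 2 * (1 - beta) * 2 * lam - (3 + Cf) * Unorm). set (c2 := - (2 * (1 - beta) * (lam * lam))).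
  assert (Hq : RInt (fun y => c1 * (rho y * w s y) + c2 * rho y) e b <= RInt (qq s) e b).
  { apply RInt_le; try lra. apply (ex_RInt_ext (fun y => scal c1 (rho y * w s y) + scal c2 (rho y))).
    intros; reflexivity. apply (@ex_RInt_plus R_NormedModule); apply (@ex_RInt_scal R_NormedModule); auto.
    apply Hex; intros; apply qq_cpt; auto.
    intros y Hy. unfold qq, c1, c2.
    pose proof (Hrho0 y ltac:(lra)). pose proof (w_nonneg s y Hs ltac:(lra)). pose proof (U_ge s Hs).
    assert (E : 2 * (1 - beta) * rho y * (w s y * w s y) + (3 + Cf) * U s * rho y * w s y
      - ((2 * (1 - beta) * 2 * lam - (3 + Cf) * Unorm) * (rho y * w s y) + - (2 * (1 - beta) * (lam * lam)) * rho y)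
      = 2 * (1 - beta) * rho y * ((w s y - lam) * (w s y - lam)) + (3 + Cf) * (U s + Unorm) * (rho y * w s y)) by ring.
    assert (0 <= 2 * (1 - beta) * rho y * ((w s y - lam) * (w s y - lam))).
    { apply Rmult_le_pos. apply Rmult_le_pos; lra. apply Rle_0_sqr. }
    assert (0 <= (3 + Cf) * (U s + Unorm) * (rho y * w s y)).
    { apply Rmult_le_pos. apply Rmult_le_pos; lra. apply Rmult_le_pos; lra. }
    lra. }
  rewrite lin2 in Hq by auto.
  assert (HX : RInt (fun y => rho y * w s y) e b = X) by reflexivity. rewrite HX in Hq.
  assert (HPv : RInt rho e b = Pv) by reflexivity. rewrite HPv in Hq.
  assert (Ec : c1 * X + c2 * Pv = 2 * (1 - beta) * (X * X) / Pv - Unorm * (3 + Cf) * X).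
  { unfold c1, c2, lam. field. lra. }
  unfold errn. fold e b. lra.
Qed.

Lemma en_small : forall eps, eps > 0 -> exists N, forall n, (n >= N)%nat -> en n < eps.
Proof.
  intros eps He. destruct (INR_unbounded (A / eps)) as [N HN]. exists N. intros n Hn.
  apply le_INR in Hn. unfold en. apply (Rmult_lt_reg_r (INR n + 2)). pose proof (pos_INR n); lra.
  unfold Rdiv. rewrite Rmult_assoc, Rinv_l, Rmult_1_r by (pose proof (pos_INR n); lra).
  apply (Rmult_lt_compat_r eps) in HN; auto. unfold Rdiv in HN. rewrite Rmult_assoc, Rinv_l, Rmult_1_r in HN by lra.
  assert (INR N * eps <= INR n * eps) by (apply Rmult_le_compat_r; lra). nra.
Qed.
Lemma bn_large : forall M, exists N, forall n, (n >= N)%nat -> bn n >= M.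
Proof.
  intros M. destruct (INR_unbounded M) as [N HN]. exists N. intros n Hn. apply le_INR in Hn. unfold bn. lra.
Qed.

Lemma cv_lim_inf (F : R -> R) l : has_lim_inf F l -> Un_cv (fun n => F (bn n)) l.
Proof.
  intros H eps He. destruct (H eps He) as [M HM]. destruct (bn_large M) as [N HN]. exists N.
  intros n Hn. unfold R_dist. apply HM. apply HN; auto.
Qed.
Lemma cv_small (u : nat -> R) c : (forall n, Rabs (u n) <= c * en n) -> Un_cv u 0.
Proof.
  intros H eps He. destruct (Rle_dec c 0) as [Hc|Hc].
  - exists 0%nat. intros n _. unfold R_dist. rewrite Rminus_0_r. pose proof (en_pos n).
    specialize (H n). assert (c * en n <= 0) by nra. lra.
  - destruct (en_small (eps / c)) as [N HN]. apply Rdiv_lt_0_compat; lra.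
    exists N. intros n Hn. unfold R_dist. rewrite Rminus_0_r. specialize (HN n Hn).
    eapply Rle_lt_trans. apply H. apply (Rmult_lt_compat_l c) in HN; [|lra].
    replace (c * (eps / c)) with eps in HN by (field; lra). lra.
Qed.

Lemma Pn_eq n : Pn n = P (bn n) - P (en n).
Proof.
  pose proof (en_pos n). pose proof (bn_gt n). unfold Pn, P.
  assert (H1 : ex_RInt rho 0 (en n)) by (apply P_ex; lra).
  assert (H2 : ex_RInt rho (en n) (bn n)) by (apply ex_RInt_pos; try lra; intros; apply rho_cpt; auto).
  assert (E : RInt rho 0 (en n) + RInt rho (en n) (bn n) = RInt rho 0 (bn n)) by (apply (RInt_Chasles rho 0 (en n) (bn n) H1 H2)).
  lra.
Qed.
Lemma Xn_eq s n : 0 < s < T -> Xn s n = Gb s (bn n) - Gb s (en n).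
Proof.
  intros Hs. pose proof (en_pos n). pose proof (bn_gt n). unfold Xn, Gb.
  assert (H1 : ex_RInt (fun y => rho y * w s y) 0 (en n)) by (apply Gb_ex; auto; lra).
  assert (H2 : ex_RInt (fun y => rho y * w s y) (en n) (bn n)) by (apply ex_RInt_pos; try lra; intros; apply cmul; [apply rho_cpt|apply w_cpt]; auto).
  assert (E : RInt (fun y => rho y * w s y) 0 (en n) + RInt (fun y => rho y * w s y) (en n) (bn n) = RInt (fun y => rho y * w s y) 0 (bn n))
    by (apply (RInt_Chasles _ 0 (en n) (bn n) H1 H2)).
  lra.
Qed.

Lemma Pn_cv : Un_cv Pn rL.
Proof.
  apply (Un_cv_ext (fun n => P (bn n) - P (en n))). intros; symmetry; apply Pn_eq.
  replace rL with (rL - 0) by ring. apply CV_minus. apply cv_lim_inf. apply rL_lim.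
  apply (cv_small _ K). intros n. pose proof (en_pos n). rewrite Rabs_right. apply P_lin; lra. apply Rle_ge, P_nonneg; lra.
Qed.

Lemma Xn_cv s : 0 < s < T -> Un_cv (fun n => Xn s n) (Gf s).
Proof.
  intros Hs. apply (Un_cv_ext (fun n => Gb s (bn n) - Gb s (en n))). intros; symmetry; apply Xn_eq; auto.
  replace (Gf s) with (Gf s - 0) by ring. apply CV_minus. apply cv_lim_inf. apply Gf_lim; auto.
  apply (cv_small _ (K * C)). intros n. pose proof (en_pos n).
  unfold Gb. apply (Rle_trans _ ((K * C) * (en n - 0))). apply RInt_abs_le; try lra. apply Gb_ex; auto; lra.
  intros y Hy. rewrite Rabs_mult. destruct (HK y ltac:(lra)). apply Rmult_le_compat; try apply Rabs_pos; auto.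
  apply w_bdC; auto; lra. rewrite Rminus_0_r; lra.
Qed.

Lemma errn_cv : Un_cv errn 0.
Proof.
  pose proof K_ge0. pose proof C_ge0. pose proof L_ge0. pose proof MXs_ge0. pose proof MX_ge0.
  unfold errn. replace 0 with (0 + 0) by ring. apply CV_plus.
  - apply (cv_small _ (/ 2 * K * (C * C) * A + K * C + L * C + MXs)). intros n. pose proof (en_pos n).
    assert (0 <= / 2 * K * (C * C)) by (apply Rmult_le_pos; [lra|nra]).
    assert (/ 2 * K * (C * C) * (en n * en n) <= / 2 * K * (C * C) * A * en n).
    { set (c0 := / 2 * K * (C * C)) in *. replace (c0 * A * en n) with (c0 * (A * en n)) by ring.
      apply Rmult_le_compat_l; auto. apply Rmult_le_compat_r; lra. }
    assert (0 <= K * C * en n) by (apply Rmult_le_pos; nra). assert (0 <= L * C * en n) by (apply Rmult_le_pos; nra).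
    assert (0 <= MXs * en n) by (apply Rmult_le_pos; nra).
    assert (0 <= / 2 * K * (C * C) * (en n * en n)) by (apply Rmult_le_pos; nra).
    rewrite Rabs_right by lra. nra.
  - intros eps He. destruct (bn_large (4 * MX / eps + 1)) as [N HN]. exists N. intros n Hn. unfold R_dist.
    specialize (HN n Hn). pose proof (bn_gt n). rewrite Rminus_0_r.
    assert (Hb : 0 < bn n) by lra.
    assert (Hp : 0 <= MX * (4 / bn n)) by (apply Rmult_le_pos; [lra|apply Rdiv_le_0_compat; lra]).
    rewrite Rabs_right by lra.
    apply (Rmult_lt_reg_r (bn n)); auto. replace (MX * (4 / bn n) * bn n) with (4 * MX) by (field; lra).
    assert (Hlt : 4 * MX / eps < bn n) by lra.
    apply (Rmult_lt_compat_r eps) in Hlt; auto. replace (4 * MX / eps * eps) with (4 * MX) in Hlt by (field; lra). lra.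
Qed.


Lemma cv_le (u v : nat -> R) a b N : Un_cv u a -> Un_cv v b -> (forall n, (n >= N)%nat -> v n <= u n) -> b <= a.
Proof.
  intros Hu Hv H. assert (Hd : Un_cv (fun n => u n - v n) (a - b)) by (apply CV_minus; auto).
  assert (0 <= a - b); [|lra]. apply (lim_ge _ _ _ N Hd). intros n Hn. specialize (H n Hn). lra.
Qed.

Lemma cv_const c : Un_cv (fun _ => c) c.
Proof. intros eps He. exists 0%nat. intros. unfold R_dist. rewrite Rminus_diag, Rabs_R0. lra. Qed.

Lemma cv_inv (u : nat -> R) l : l <> 0 -> Un_cv u l -> Un_cv (fun n => / u n) (/ l).
Proof.
  intros Hl H. apply is_lim_seq_Reals. apply is_lim_seq_Reals in H.
  assert (Hi := is_lim_seq_inv u l H). simpl in Hi. apply Hi. intros E. inversion E. auto.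
Qed.

Lemma main_sec t : 0 < t < T -> exists l, derivable_pt_lim Gf t l /\
   l >= 2 * (1 - beta) / rL * (Gf t) ^ 2 - Unorm * (3 + Cf) * Gf t.
Proof.
  intros Ht.
  assert (Hc : Cauchy_crit (fun n => Dn t n)).
  { intros eps He. destruct (Dn_cauchy (eps / 2) ltac:(lra)) as [N HN]. exists N. intros n m Hn Hm.
    unfold R_dist. specialize (HN n m t Hn Hm Ht). lra. }
  destruct (Rcomplete.R_complete _ Hc) as [D HD].
  exists D. split.
  - set (r := Rmin t (T - t)). assert (Hr : 0 < r) by (unfold r; apply Rmin_pos; lra).
    assert (Hin : forall u, Rabs (u - t) < r -> 0 < u < T).
    { intros u Hu. apply Rabs_def2 in Hu. assert (r <= t) by apply Rmin_l. assert (r <= T - t) by apply Rmin_r. lra. }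
    apply (unif_deriv (fun n s => Xn s n) (fun n s => Dn s n) Gf D t r Hr).
    + intros n s Hs. unfold Xn, Dn. apply fn_der. auto. pose proof (en_pos n). pose proof (bn_gt n). lra.
    + intros s Hs. apply Xn_cv; auto.
    + intros e He. destruct (Dn_cauchy e He) as [N HN]. exists N. intros n m s Hn Hm Hs. apply HN; auto.
    + auto.
  - destruct rL_lim as [_ HrL].
    destruct (Pn_cv (rL / 2) ltac:(lra)) as [N0 HN0].
    set (R0 := 2 * (1 - beta) * (Gf t * Gf t) * / rL - Unorm * (3 + Cf) * Gf t - 0).
    assert (HR : Un_cv (fun n => 2 * (1 - beta) * (Xn t n * Xn t n) * / Pn n - Unorm * (3 + Cf) * Xn t n - errn n) R0).
    { unfold R0. apply CV_minus. apply CV_minus.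
      apply CV_mult. apply CV_mult. apply (Un_cv_ext (fun _ => 2 * (1 - beta))). intros; auto. apply cv_const.
      apply CV_mult; apply Xn_cv; auto. apply cv_inv. lra. apply Pn_cv.
      apply CV_mult. apply (Un_cv_ext (fun _ => Unorm * (3 + Cf))). intros; auto. apply cv_const. apply Xn_cv; auto.
      apply errn_cv. }
    assert (R0 <= D).
    { apply (cv_le (fun n => Dn t n) _ _ _ N0 HD HR). intros n Hn.
      specialize (HN0 n Hn). unfold R_dist in HN0. apply Rabs_def2 in HN0.
      pose proof (Dn_ge n ltac:(lra) t Ht). unfold Rdiv in H. lra. }
    unfold R0 in H. replace (2 * (1 - beta) / rL * Gf t ^ 2) with (2 * (1 - beta) * (Gf t * Gf t) * / rL) by (field; lra).
    lra.
Qed.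

End Main.

Theorem lemma3p3
  (T : R) (HT : T > 0)
  (U : R -> R)
  (* U in C([0,T]), U <= 0 *)
  (HUc : forall x, 0 <= x <= T -> cont_within (fun z => 0 <= z <= T) U x)
  (HUneg : forall x, 0 <= x <= T -> U x <= 0)
  (* Unorm = ||U||_{L^oo([0,T])} *)
  (Unorm : R)
  (HUnorm : is_lub (fun v => exists x, 0 <= x <= T /\ v = Rabs (U x)) Unorm)
  (* w and its classical partial derivatives d_t w, d_y w, d_y^2 w on H_T *)
  (w wt wy wyy : R -> R -> R)
  (Hwt : forall t y, 0 < t < T -> 0 < y -> derivable_pt_lim (fun s => w s y) t (wt t y))
  (Hwy : forall t y, 0 < t < T -> 0 < y -> derivable_pt_lim (w t) y (wy t y))
  (Hwyy : forall t y, 0 < t < T -> 0 < y -> derivable_pt_lim (wy t) y (wyy t y))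
  (Hwc : cont2_on (fun t y => 0 < t < T /\ 0 <= y) w)
  (Hwtc : cont2_on (fun t y => 0 < t < T /\ 0 < y) wt)
  (Hwyc : cont2_on (fun t y => 0 < t < T /\ 0 < y) wy)
  (Hwyyc : cont2_on (fun t y => 0 < t < T /\ 0 < y) wyy)
  (Hwpos : forall t y, 0 < t < T -> 0 < y -> w t y >= 0)
  (* the equation in H_T;  int_{+oo}^y w dy' = - int_y^oo w dy' *)
  (Hpde : forall t y, 0 < t < T -> 0 < y ->
      wt t y - (w t y) ^ 2
      + Rint (fun y' => w t y' + U t) 0 y * wy t y
      - 2 * U t * w t y
      - RintInf (w t) y
      - wyy t y = 0)
  (* boundary conditions *)
  (Hbc0 : forall t, 0 < t < T -> w t 0 = - U t)
  (Hbcinf : forall t, 0 < t < T -> has_lim_inf (w t) 0)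
  (* sup_{H_T} (|w| + |d_y w|) e^y < oo *)
  (Hdecay : exists C, forall t y, 0 < t < T -> 0 < y ->
      (Rabs (w t y) + Rabs (wy t y)) * exp y <= C)
  (* admissible weight *)
  (rho : R -> R) (Cf beta : R)
  (Hrho : admissible_weight rho Cf beta) :
  let G := fun s => RintInf (fun y => rho y * w s y) 0 in
  let rhoL1 := RintInf (fun y => Rabs (rho y)) 0 in
  forall t, 0 < t < T ->
    exists l, derivable_pt_lim G t l /\
      l >= 2 * (1 - beta) / rhoL1 * (G t) ^ 2 - Unorm * (3 + Cf) * G t.
Proof.
  intros G rhoL1 t Ht.
  destruct Hdecay as [C HC].
  destruct Hrho as [HCf [Hbeta [Hrho0 [[drho [Hdrho [Hdrhoc [[K HK] [L HL]]]]] [HL1 [A [M0 [B [f [df [ddf [g [dg [ddg [eta [deta [HA [HAM [HMB [Hrf [Hrg [Hdf [Hdfc [Hddf [Hddfc [Hdg [Hddg [Hddgc [HgL1 [Hsm [Heta [Heta0 [Heta1 [Hdeta [Hf0 [Hfpos [HF2 [HF3 [HF4 [HgL [HdgL [Hgpos [HG2 [HG3 [HFG1a [HFG1b HFG2]]]]]]]]]]]]]]]]]]]]]]]]]]]]]]]]]]]]]]]]]]]]]].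
  destruct (main_sec T U Unorm w wt wy wyy C HT HUneg HUnorm Hwy Hwyy Hwc Hwpos Hbc0 HC Hwt Hwtc Hpde
     rho drho Cf beta K L A M0 B f df ddf g dg ddg eta deta HCf Hbeta Hrho0 Hdrho Hdrhoc HK HL HL1 HA HAM HMB
     Hrf Hrg Hdf Hddf Hdg Hddg Heta Heta0 Heta1 Hdeta Hf0 Hfpos HF2 HF3 HF4 Hgpos HG2 HG3 HFG2 t Ht) as [l [Hl1 Hl2]].
  exists l. split; [exact Hl1|exact Hl2].
Qed.
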